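(* Assume the setting below. Let $u(t,x)$ be a solution of the mature-population equation that spreads with speed $c^*/T$, i.e. $\lim_{t\to\infty}\sup_{|x|\ge ct}u(t,x)=0$ for $c>c^*/T$ and $\lim_{t\to\infty}\sup_{|x|\le ct}|u(t,x)-\bar u(t)|=0$ for $c\in(0,c^*/T)$. Let $v$ be the solution of $$\partial_tv=D_I(t)\partial_{xx}v-d_I(t)v+b(t,u(t,x))-R\big(t,u(t-\tau(t),\cdot)\big)(x)$$ with a bounded initial value $v(0,\cdot)$. Then $\lim_{t\to+\infty}\sup_{|x|\ge ct}v(x,t)=0$ for every $c>c^*/T$, and $\lim_{t\to+\infty}\sup_{|x|\le ct}|v(x,t)-\bar v(t)|=0$ for every $c\in(0,c^*/T)$.
   Context: Setting: $T>0$; $D_M,D_I\ge0$, $d_M,d_I>0$, $\tau>0$, $p\ge0$ are $C^1$ $T$-periodic; $h\in C^1([0,\infty);[0,\infty))$; $b(t,u)=p(t)h(u)$; $0<\alpha\le\beta<t_\alpha\le t_\beta<T$ with $t_\alpha-\tau(t_\alpha)=\alpha$, $t_\beta-\tau(t_\beta)=\beta$, $p=0$ on $[0,\alpha]\cup[\beta,T]$; $\tau'<1$; $h(0)=0$, $h(z)\to0$ as $z\to\infty$, $h$ increasing on $[0,z^* )$ and decreasing on $[z^*,\infty)$; $h(\lambda z)\ge\lambda h(z)$, $\lambda\in(0,1)$; $L>1$; $h$ nondecreasing on $[0,u^*]$. $k_I,k_M$ are the Green functions of $\partial_t\rho=D_I(t)\rho_{xx}-d_I(t)\rho$, resp. with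 $D_M,d_M$. $R(t,\phi)(x)=(1-\tau'(t))(k_I(t,t-\tau(t),\cdot)*b(t-\tau(t),\phi))(x)$. The mature-population equation is $\partial_tu=D_M(t)u_{xx}-d_M(t)u+R(t,u(t-\tau(t),\cdot))(x)$, with solutions determined by $u(0,\cdot)$; $Q$ is its time-$T$ map, $u^*$ the minimal positive fixed point of $Q$ restricted to constants, $\bar u(t)$ the ($T$-periodic) solution with $u(0)\equiv u^*$, and $c^*>0$ the spreading speed of $Q$. $L=\frac{\overline{k}_M(T,0)}{1-\overline{k}_M(T,0)}\int_{t_\alpha}^{t_\beta}\frac{(1-\tau'(s))e^{-\int_{s-\tau(s)}^sd_I}p(s-\tau(s))h'(0)}{\overline{k}_M(s,s-\tau(s))}ds$ with $\overline{k}_M(t,s)=e^{-\int_s^td_M}$. $\bar v(t)$ is the unique nontrivial bounded $T$-periodic, spatially constant solution of the $v$-equation with $u\equiv\bar u(t)$; explicitly $\bar v(t)=\int_0^te^{-\int_s^td_I}\big[b(s,\bar u(s))-R(s,\bar u(s-\tau(s)))\big]ds$. *)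

(* Defs.v *)
From Stdlib Require Import Reals.
From Coquelicot Require Import Coquelicot.
Open Scope R_scope.

Definition periodic (T : R) (f : R -> R) : Prop := forall t, f (t + T) = f t.

Definition isC1 (f : R -> R) : Prop :=
  forall t, ex_derive f t /\ continuous (Derive f) t.

Definition jcont_on (w : R -> R -> R) : Prop :=
  forall t x, 0 <= t -> forall eps, 0 < eps -> exists del, 0 < del /\
    forall t' x', 0 <= t' -> Rabs (t' - t) < del -> Rabs (x' - x) < del ->
      Rabs (w t' x' - w t x) < eps.

Definition strip_bounded (w : R -> R -> R) : Prop :=
  forall t, 0 <= t -> exists M, forall s x, 0 <= s <= t -> Rabs (w s x) <= M.

Definition regular (w : R -> R -> R) : Prop := jcont_on w /\ strip_bounded w.

Definition gauss (sig z : R) : R := exp (- (z ^ 2) / (4 * sig)) / sqrt (4 * PI * sig).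

Definition conv (k phi : R -> R) (x : R) : R :=
  RInt_gen (fun y => k (x - y) * phi y) (Rbar_locally m_infty) (Rbar_locally p_infty).

(* (k(t,s,.) * phi)(x), where k is the Green function of
   d_t rho = D(t) rho_xx - d(t) rho :
   k(t,s,x) = exp(-int_s^t d) * G_{int_s^t D}(x), and when int_s^t D = 0
   (D vanishes on [s,t]) the kernel is exp(-int_s^t d) times a Dirac mass. *)
Definition evol (D d : R -> R) (t s : R) (phi : R -> R) (x : R) : R :=
  let sig := RInt D s t in
  exp (- RInt d s t) *
  (if Rlt_dec 0 sig then conv (gauss sig) phi x else phi x).

Definition kbar (d : R -> R) (t s : R) : R := exp (- RInt d s t).

(* R(t,phi)(x) = (1 - tau'(t)) (k_I(t, t - tau t, .) * b(t - tau t, phi))(x),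
   b(t,u) = p(t) h(u) *)
Definition Rop (DI dI tau p h : R -> R) (t : R) (phi : R -> R) (x : R) : R :=
  (1 - Derive tau t) * evol DI dI t (t - tau t) (fun y => p (t - tau t) * h (phi y)) x.

(* w is the (mild, Duhamel) solution of
   d_t w = D(t) w_xx - d(t) w + F(t,x),  w(0,.) = w0 *)
Definition mild (D d : R -> R) (F : R -> R -> R) (w0 : R -> R) (w : R -> R -> R) : Prop :=
  (forall x, w 0 x = w0 x) /\
  (forall t x, 0 < t ->
     w t x = evol D d t 0 w0 x + RInt (fun s => evol D d t s (F s) x) 0 t).

(* u solves the mature-population equation
   d_t u = D_M u_xx - d_M u + R(t, u(t - tau t, .)) with u(0,.) = u0
   (values of u at negative times are irrelevant since p(t - tau t) = 0
   for t in [0, t_alpha]) *)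
Definition SolU (DM dM DI dI tau p h : R -> R) (u0 : R -> R) (u : R -> R -> R) : Prop :=
  regular u /\ (forall t x, 0 <= t -> 0 <= u t x) /\
  mild DM dM (fun s y => Rop DI dI tau p h s (u (s - tau s)) y) u0 u.

(* v solves d_t v = D_I v_xx - d_I v + b(t,u(t,x)) - R(t, u(t - tau t, .))(x),
   v(0,.) = v0 *)
Definition SolV (DI dI tau p h : R -> R) (u : R -> R -> R) (v0 : R -> R)
  (v : R -> R -> R) : Prop :=
  regular v /\
  mild DI dI (fun s y => p s * h (u s y) - Rop DI dI tau p h s (u (s - tau s)) y) v0 v.

Definition QconstFix (T : R) (DM dM DI dI tau p h : R -> R) (w : R) : Prop :=
  exists u, SolU DM dM DI dI tau p h (fun _ => w) u /\ forall x, u T x = w.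

Definition min_pos_fix (T : R) (DM dM DI dI tau p h : R -> R) (ustar : R) : Prop :=
  0 < ustar /\ QconstFix T DM dM DI dI tau p h ustar /\
  forall w, 0 < w < ustar -> ~ QconstFix T DM dM DI dI tau p h w.

(* c is the spreading speed of Q (Weinberger / Liang-Zhao), where
   Q^n[phi] = u(nT,.) for the solution u with u(0,.) = phi, and
   C_{u*} = continuous phi with 0 <= phi <= u* *)
Definition spreading_speed (T : R) (DM dM DI dI tau p h : R -> R) (ustar c : R) : Prop :=
  (forall c', c < c' -> forall phi : R -> R,
     continuity phi -> (forall x, 0 <= phi x <= ustar) ->
     (exists K, forall x, K < Rabs x -> phi x = 0) ->
     forall w, SolU DM dM DI dI tau p h phi w ->
     forall eps, 0 < eps -> exists N : nat, forall (n : nat) x, (N <= n)%nat ->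
       INR n * c' <= Rabs x -> Rabs (w (INR n * T) x) <= eps) /\
  (forall c', 0 < c' < c -> forall phi : R -> R,
     continuity phi -> (forall x, 0 <= phi x <= ustar) ->
     (exists x, phi x <> 0) ->
     forall w, SolU DM dM DI dI tau p h phi w ->
     forall eps, 0 < eps -> exists N : nat, forall (n : nat) x, (N <= n)%nat ->
       Rabs x <= INR n * c' -> Rabs (w (INR n * T) x - ustar) <= eps).

Definition Lconst (T : R) (DI dI DM dM tau p h : R -> R) (ta tb : R) : R :=
  kbar dM T 0 / (1 - kbar dM T 0) *
  RInt (fun s => (1 - Derive tau s) * exp (- RInt dI (s - tau s) s)
                   * p (s - tau s) * Derive h 0 / kbar dM s (s - tau s)) ta tb.

Definition vbar (DI dI tau p h : R -> R) (ubar : R -> R) (t : R) : R :=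
  RInt (fun s => exp (- RInt dI s t) *
          (p s * h (ubar s) - Rop DI dI tau p h s (fun _ => ubar (s - tau s)) 0)) 0 t.

(* Main.v *)
Require Import Defs.
From Stdlib Require Import Reals.
From Coquelicot Require Import Coquelicot.
Open Scope R_scope.
From Stdlib Require Import Lra Lia Psatz FunctionalExtensionality ZArith.

Lemma exR_all (f : R -> R) a b : (forall x, continuous f x) -> ex_RInt f a b.
Proof. intros H; apply (ex_RInt_continuous (V:=R_CompleteNormedModule)); intros; apply H. Qed.

Lemma edc (f : R -> R) x : ex_derive f x -> continuous f x.
Proof. intros H. apply (ex_derive_continuous (K:=R_AbsRing) (V:=R_NormedModule)). exact H. Qed.

Lemma RIc (f : R -> R) a b : ex_RInt f a b -> is_RInt f a b (RInt f a b).
Proof. intros H. apply (RInt_correct (V:=R_CompleteNormedModule)). exact H. Qed.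

Lemma RIu (f : R -> R) a b l : is_RInt f a b l -> RInt f a b = l.
Proof. intros H. apply (is_RInt_unique (V:=R_CompleteNormedModule)). exact H. Qed.

Lemma exp_le (x y : R) : x <= y -> exp x <= exp y.
Proof. intros [H|H]. left; apply exp_increasing, H. subst; right; reflexivity. Qed.

Definition e2 (t : R) := exp (- (t ^ 2)).
Definition Ag (x : R) := RInt e2 0 x.
Definition fB (x t : R) := exp (- (x ^ 2) * (1 + t ^ 2)) / (1 + t ^ 2).
Definition Bg (x : R) := RInt (fun t => fB x t) 0 1.

Lemma e2_cont x : continuous e2 x.
Proof. apply edc; unfold e2; auto_derive; auto. Qed.

Lemma Ag_derive x : is_derive Ag x (e2 x).
Proof.
  unfold Ag. apply (is_derive_RInt (V:=R_NormedModule)) with (a := 0).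
  - apply filter_forall; intros; apply RIc, exR_all, e2_cont.
  - apply e2_cont.
Qed.

Lemma dfB (x t : R) : is_derive (fun z : R => fB z t) x (-2 * x * exp (- (x ^ 2) * (1 + t ^ 2))).
Proof.
  unfold fB. auto_derive; auto.
  replace (x ^ 2) with (x * (x * 1)) by ring. replace (t ^ 2) with (t * (t * 1)) by ring.
  field. nra.
Qed.

Lemma fB_cont x t : continuous (fB x) t.
Proof. apply edc; unfold fB; auto_derive; nra. Qed.

Lemma cont2_expr x t :
  continuity_2d_pt (fun u v => -2 * u * exp (- (u ^ 2) * (1 + v ^ 2))) x t.
Proof.
  apply continuity_2d_pt_mult.
  - apply continuity_2d_pt_mult. apply continuity_2d_pt_const. apply continuity_2d_pt_id1.
  - apply continuity_1d_2d_pt_comp with (f := exp).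
    + apply derivable_continuous_pt, derivable_pt_exp.
    + apply continuity_2d_pt_mult.
      * apply continuity_2d_pt_opp. simpl.
        apply continuity_2d_pt_mult. apply continuity_2d_pt_id1.
        apply continuity_2d_pt_mult. apply continuity_2d_pt_id1. apply continuity_2d_pt_const.
      * apply continuity_2d_pt_plus. apply continuity_2d_pt_const. simpl.
        apply continuity_2d_pt_mult. apply continuity_2d_pt_id2.
        apply continuity_2d_pt_mult. apply continuity_2d_pt_id2. apply continuity_2d_pt_const.
Qed.

Lemma Bg_derive x : is_derive Bg x (-2 * e2 x * Ag x).
Proof.
  unfold Bg.
  assert (H : is_derive (fun x0 => RInt (fun t => fB x0 t) 0 1) x
     (RInt (fun t => Derive (fun u => fB u t) x) 0 1)).
  { apply (is_derive_RInt_param (fun x0 t => fB x0 t) 0 1 x).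
    - apply filter_forall; intros; eexists; apply dfB.
    - intros t _. eapply continuity_2d_pt_ext; [|apply (cont2_expr x t)].
      intros u v; simpl. symmetry; apply is_derive_unique, dfB.
    - apply filter_forall; intros. apply exR_all, fB_cont. }
  replace (-2 * e2 x * Ag x) with (RInt (fun t => Derive (fun u => fB u t) x) 0 1); auto.
  rewrite (RInt_ext _ (fun t => scal (-2 * e2 x) (scal x (e2 (x * t + 0))))).
  2:{ intros t _. simpl. rewrite (is_derive_unique _ _ _ (dfB x t)). unfold e2, scal; simpl; unfold mult; simpl.
      replace (- (x * (x * 1)) * (1 + t * (t * 1))) with (- (x * (x * 1)) + - ((x * t + 0) * ((x * t + 0) * 1))) by ring.
      rewrite exp_plus. ring. }
  rewrite (RInt_scal (V:=R_CompleteNormedModule)).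
  - rewrite (RInt_comp_lin (V:=R_CompleteNormedModule)).
    + unfold Ag, scal; simpl; unfold mult; simpl. f_equal. f_equal; ring.
    + apply exR_all, e2_cont.
  - apply exR_all; intros; apply edc; unfold e2, scal; simpl; unfold mult; simpl; auto_derive; auto.
Qed.

Lemma Bg0 : Bg 0 = PI / 4.
Proof.
  unfold Bg. rewrite <- atan_1.
  replace (atan 1) with (atan 1 - atan 0) by (rewrite atan_0; ring).
  assert (H := is_RInt_derive atan (fun t => / (1 + t ^ 2)) 0 1).
  rewrite (RInt_ext _ (fun t => / (1 + t ^ 2))).
  - apply RIu, H.
    + intros t _. apply is_derive_Reals, derivable_pt_lim_atan.
    + intros t _. apply edc. auto_derive. nra.
  - intros t _. unfold fB. rewrite pow_i by lia.
    replace (- 0 * (1 + t ^ 2)) with 0 by ring. rewrite exp_0. unfold Rdiv; apply Rmult_1_l.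
Qed.

Lemma Hconst x : Ag x ^ 2 + Bg x = PI / 4.
Proof.
  assert (Hd : forall y, is_derive (fun z => Ag z ^ 2 + Bg z) y 0).
  { intros y. eapply is_derive_ext.
    { intros t. reflexivity. }
    replace 0 with (plus (INR 2 * 1 * (e2 y) * Ag y ^ 1) (-2 * e2 y * Ag y)) at 1.
    2:{ unfold plus; simpl; ring. }
    apply (is_derive_plus (fun z => Ag z ^ 2) Bg).
    - replace (INR 2 * 1 * e2 y * Ag y ^ 1) with (INR 2 * e2 y * Ag y ^ 1) by ring.
      apply (is_derive_pow Ag 2 y (e2 y)), Ag_derive.
    - apply Bg_derive. }
  assert (HI := is_RInt_derive (fun z => Ag z ^ 2 + Bg z) (fun _ => 0) 0 x
                  (fun y _ => Hd y) (fun y _ => continuous_const 0 y)).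
  assert (HI2 := is_RInt_const 0 x 0).
  assert (E := is_RInt_unique _ _ _ _ HI2). rewrite (is_RInt_unique _ _ _ _ HI) in E.
  unfold minus, plus, opp, scal in E; simpl in E; unfold mult in E; simpl in E.
  assert (A0 : Ag 0 = 0) by (unfold Ag; apply (RInt_point (V:=R_CompleteNormedModule))).
  rewrite A0 in E. rewrite Bg0 in E.
  unfold zero in E; simpl in E. lra.
Qed.

Lemma Bg_bound x : 0 <= Bg x <= exp (- (x ^ 2)).
Proof.
  unfold Bg. split.
  - apply RInt_ge_0; [lra| apply exR_all, fB_cont |].
    intros t _; unfold fB. apply Rle_mult_inv_pos. apply Rlt_le, exp_pos. nra.
  - replace (exp (- x ^ 2)) with (RInt (fun _ => exp (- x ^ 2)) 0 1).
    2:{ rewrite RInt_const. unfold scal; simpl; unfold mult; simpl; ring. }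
    apply RInt_le; [lra | apply exR_all, fB_cont | apply ex_RInt_const |].
    intros t Ht; unfold fB.
    apply Rle_trans with (exp (- (x ^ 2) * (1 + t ^ 2))).
    + unfold Rdiv. rewrite <- (Rmult_1_r (exp _)) at 2.
      apply Rmult_le_compat_l. apply Rlt_le, exp_pos.
      rewrite <- Rinv_1. apply Rinv_le_contravar; nra.
    + apply exp_le. nra.
Qed.

Lemma lim_pinf (f : R -> R) l :
  (forall eps, 0 < eps -> exists X, forall x, X < x -> Rabs (f x - l) < eps) ->
  filterlim f (Rbar_locally p_infty) (locally l).
Proof.
  intros H P [eps HP]. destruct (H eps (cond_pos eps)) as [X HX].
  exists X. intros x Hx. apply HP. apply HX, Hx.
Qed.

Lemma lim_minf (f : R -> R) l :
  (forall eps, 0 < eps -> exists X, forall x, x < X -> Rabs (f x - l) < eps) ->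
  filterlim f (Rbar_locally m_infty) (locally l).
Proof.
  intros H P [eps HP]. destruct (H eps (cond_pos eps)) as [X HX].
  exists X. intros x Hx. apply HP. apply HX, Hx.
Qed.

Lemma Ag_ge0 x : 0 <= x -> 0 <= Ag x.
Proof.
  intros Hx. unfold Ag. apply RInt_ge_0; auto. apply exR_all, e2_cont.
  intros; unfold e2; apply Rlt_le, exp_pos.
Qed.

Lemma sqrtPI_pos : 0 < sqrt PI.
Proof. apply sqrt_lt_R0, PI_RGT_0. Qed.

Lemma Ag_lim x : 0 <= x -> Rabs (Ag x - sqrt PI / 2) <= exp (- (x ^ 2)) / (sqrt PI / 2).
Proof.
  intros Hx. assert (H := Hconst x). assert (HB := Bg_bound x). assert (HA := Ag_ge0 x Hx).
  assert (Hs := sqrtPI_pos). assert (Hs2 : sqrt PI * sqrt PI = PI) by (apply sqrt_sqrt; left; apply PI_RGT_0).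
  apply Rmult_le_reg_r with (sqrt PI / 2). lra.
  replace (exp (- x ^ 2) / (sqrt PI / 2) * (sqrt PI / 2)) with (exp (- x ^ 2)) by (field; lra).
  apply Rle_trans with (Rabs (Ag x - sqrt PI / 2) * (Ag x + sqrt PI / 2)).
  - apply Rmult_le_compat_l. apply Rabs_pos. lra.
  - rewrite <- (Rabs_pos_eq (Ag x + sqrt PI / 2)) by lra. rewrite <- Rabs_mult.
    replace ((Ag x - sqrt PI / 2) * (Ag x + sqrt PI / 2)) with (- Bg x) by nra.
    rewrite Rabs_Ropp, Rabs_pos_eq by lra. lra.
Qed.

Definition g1 (w : R) := gauss 1 w.
Definition Pg (x : R) := RInt g1 0 x.

Lemma g1_cont x : continuous g1 x.
Proof. apply edc. unfold g1, gauss. auto_derive. auto. Qed.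

Lemma g1_pos w : 0 < g1 w.
Proof. unfold g1, gauss. apply Rdiv_lt_0_compat. apply exp_pos.
  apply sqrt_lt_R0. assert (0 < PI) by apply PI_RGT_0. lra. Qed.

Lemma g1_even w : g1 (- w) = g1 w.
Proof. unfold g1, gauss. f_equal. f_equal. f_equal. f_equal. ring. Qed.

Lemma Pg_Ag x : Pg x = Ag (x / 2) / sqrt PI.
Proof.
  unfold Pg, Ag, g1, gauss.
  assert (Hs := sqrtPI_pos).
  assert (E4 : sqrt (4 * PI * 1) = 2 * sqrt PI).
  { replace (4 * PI * 1) with ((2 * 2) * PI) by ring.
    rewrite sqrt_mult by (try lra; left; apply PI_RGT_0).
    rewrite sqrt_square by lra. ring. }
  rewrite E4.
  rewrite (RInt_ext _ (fun w => scal (/ (2 * sqrt PI)) (exp (- w ^ 2 / (4 * 1))))).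
  2:{ intros; unfold scal; simpl; unfold mult; simpl. unfold Rdiv; ring. }
  rewrite (RInt_scal (V:=R_CompleteNormedModule)).
  2:{ apply exR_all; intros; apply edc; auto_derive; auto. }
  assert (E : RInt (fun w => exp (- w ^ 2 / (4 * 1))) 0 x = 2 * RInt e2 0 (x / 2)).
  { transitivity (scal 2 (RInt e2 0 (x/2))); [| reflexivity].
    rewrite <- (RInt_scal (V:=R_CompleteNormedModule) e2 0 (x/2) 2) by (apply exR_all, e2_cont).
    rewrite (RInt_ext (fun y => scal 2 (e2 y)) (fun y => scal 2 ((fun w => exp (- w ^ 2 / (4 * 1))) (2 * y + 0)))).
    2:{ intros; unfold e2, scal; simpl; unfold mult; simpl. f_equal. f_equal. field. }
    symmetry. etransitivity.
    - apply (RInt_comp_lin (V:=R_CompleteNormedModule) (fun w => exp (- w ^ 2 / (4 * 1))) 2 0 0 (x/2)).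
      apply exR_all; intros; apply edc; auto_derive; auto.
    - f_equal; field. }
  rewrite E. unfold scal; simpl; unfold mult; simpl. field. lra.
Qed.

Lemma Pg_odd x : Pg (- x) = - Pg x.
Proof.
  unfold Pg.
  transitivity (RInt g1 (-1*0+0) (-1*x+0)). f_equal; ring.
  rewrite <- (RInt_comp_lin (V:=R_CompleteNormedModule) g1 (-1) 0 0 x) .
  2:{ apply exR_all, g1_cont. }
  rewrite (RInt_ext _ (fun y => scal (-1) (g1 y))).
  2:{ intros. f_equal. replace (-1 * x0 + 0) with (- x0) by ring. apply g1_even. }
  rewrite (RInt_scal (V:=R_CompleteNormedModule)) by (apply exR_all, g1_cont).
  unfold scal; simpl; unfold mult; simpl. ring.
Qed.

Lemma expm2_small y : 0 < y -> exp (- (y ^ 2)) <= / y.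
Proof.
  intros Hy. assert (H := exp_ineq1_le (y ^ 2)).
  rewrite exp_Ropp. apply Rinv_le_contravar; auto. nra.
Qed.

Lemma Pg_lim_p : filterlim Pg (Rbar_locally p_infty) (locally (1/2)).
Proof.
  apply lim_pinf. intros eps Heps.
  assert (Hs := sqrtPI_pos).
  exists (2 * / (eps * (sqrt PI / 2) * sqrt PI) + 2). intros x Hx.
  assert (Hx2 : 0 < x / 2).
  { assert (0 < / (eps * (sqrt PI / 2) * sqrt PI)). apply Rinv_0_lt_compat.
    apply Rmult_lt_0_compat; [apply Rmult_lt_0_compat|]; lra. lra. }
  rewrite Pg_Ag.
  replace (Ag (x / 2) / sqrt PI - 1 / 2) with ((Ag (x/2) - sqrt PI / 2) / sqrt PI) by (field; lra).
  unfold Rdiv at 1. rewrite Rabs_mult, (Rabs_pos_eq (/ sqrt PI)) by (left; apply Rinv_0_lt_compat; lra).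
  apply Rle_lt_trans with (exp (- (x/2) ^ 2) / (sqrt PI / 2) * / sqrt PI).
  { apply Rmult_le_compat_r. left; apply Rinv_0_lt_compat; lra. apply Ag_lim. lra. }
  apply Rle_lt_trans with (/ (x/2) / (sqrt PI / 2) * / sqrt PI).
  { apply Rmult_le_compat_r. left; apply Rinv_0_lt_compat; lra.
    unfold Rdiv. apply Rmult_le_compat_r. left; apply Rinv_0_lt_compat; lra.
    apply expm2_small; lra. }
  assert (K : 0 < eps * (sqrt PI / 2) * sqrt PI) by (apply Rmult_lt_0_compat; [apply Rmult_lt_0_compat|]; lra).
  assert (x / 2 > / (eps * (sqrt PI / 2) * sqrt PI)) by lra.
  replace (/ (x / 2) / (sqrt PI / 2) * / sqrt PI) with (/ ((x/2) * (sqrt PI / 2) * sqrt PI)) by (field; lra).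
  set (c := sqrt PI / 2 * sqrt PI) in *.
  assert (Hc : 0 < c) by (unfold c; apply Rmult_lt_0_compat; lra).
  replace (eps * (sqrt PI / 2) * sqrt PI) with (eps * c) in H by (unfold c; ring).
  rewrite Rinv_mult in H.
  replace (x / 2 * (sqrt PI / 2) * sqrt PI) with (x / 2 * c) by (unfold c; ring).
  rewrite <- (Rinv_inv eps). apply Rinv_lt_contravar.
  - apply Rmult_lt_0_compat. apply Rinv_0_lt_compat; lra. apply Rmult_lt_0_compat; lra.
  - apply Rmult_lt_reg_r with (/ c). apply Rinv_0_lt_compat; lra.
    replace (x / 2 * c * / c) with (x / 2) by (field; lra). lra.
Qed.

Lemma Pg_lim_m : filterlim Pg (Rbar_locally m_infty) (locally (-(1/2))).
Proof.
  intros P HP. assert (H := Pg_lim_p (fun y => P (- y))).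
  destruct HP as [eps HP].
  destruct H as [X HX].
  - exists eps. intros y Hy. apply HP. unfold ball in *; simpl in *; unfold AbsRing_ball in *.
    unfold minus, plus, opp in *; simpl in *. replace (-y + - - (1/2)) with (- (y + - (1/2))) by ring.
    rewrite Rabs_Ropp. exact Hy.
  - exists (- X). intros x Hx. simpl. rewrite <- (Ropp_involutive x). rewrite Pg_odd.
    apply HX. lra.
Qed.

Lemma Pg_deriv : forall x, Derive Pg x = g1 x.
Proof.
  intros x. unfold Pg. apply Derive_RInt.
  - apply filter_forall; intros; apply exR_all, g1_cont.
  - apply g1_cont.
Qed.

Lemma ga_int : is_RInt_gen g1 (Rbar_locally m_infty) (Rbar_locally p_infty) 1.
Proof.
  assert (H := is_RInt_gen_Derive (Fa := Rbar_locally m_infty) (Fb := Rbar_locally p_infty) Pg (-(1/2)) (1/2)).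
  replace g1 with (Derive Pg) by (apply functional_extensionality, Pg_deriv).
  replace 1 with (1/2 - -(1/2)) by field.
  apply H.
  - apply filter_forall. intros. eexists. apply (is_derive_RInt (V:=R_NormedModule)) with (a := 0).
    apply filter_forall; intros; apply RIc, exR_all, g1_cont. apply g1_cont.
  - apply filter_forall. intros. rewrite (functional_extensionality _ _ Pg_deriv). apply g1_cont.
  - apply Pg_lim_m.
  - apply Pg_lim_p.
Qed.


Ltac rring := apply Rminus_diag_uniq; ring.

Lemma RCh (f : R -> R) a b c : ex_RInt f a b -> ex_RInt f b c -> RInt f a b + RInt f b c = RInt f a c.
Proof. intros. apply (RInt_Chasles (V:=R_CompleteNormedModule)); auto. Qed.

Lemma RIsw (f : R -> R) a b : ex_RInt f a b -> RInt f b a = - RInt f a b.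
Proof. intros. symmetry. apply (opp_RInt_swap (V:=R_CompleteNormedModule)); auto. Qed.

Lemma RImin (f g : R -> R) a b : ex_RInt f a b -> ex_RInt g a b ->
  RInt (fun x => f x - g x) a b = RInt f a b - RInt g a b.
Proof. intros. apply (RInt_minus (V:=R_CompleteNormedModule)); auto. Qed.

Lemma RIscal (f : R -> R) a b c : ex_RInt f a b -> RInt (fun x => c * f x) a b = c * RInt f a b.
Proof. intros. apply (RInt_scal (V:=R_CompleteNormedModule)); auto. Qed.

Lemma RIconst a b c : RInt (fun _ => c) a b = c * (b - a).
Proof. rewrite RInt_const. unfold scal; simpl; unfold mult; simpl. ring. Qed.

Lemma abs_RI_le (f k : R -> R) a b : ex_RInt f a b -> ex_RInt k a b ->
  (forall x, Rabs (f x) <= k x) -> Rabs (RInt f a b) <= Rabs (RInt k a b).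
Proof.
  intros Hf Hk H.
  assert (G : forall a b, a <= b -> ex_RInt f a b -> ex_RInt k a b -> Rabs (RInt f a b) <= RInt k a b).
  { clear a b Hf Hk. intros a b Hab Hf Hk.
    eapply Rle_trans. apply abs_RInt_le; auto.
    apply RInt_le; [auto| apply ex_RInt_norm; auto | auto | intros; apply H]. }
  destruct (Rle_dec a b).
  - eapply Rle_trans. apply G; auto. apply Rle_abs.
  - rewrite <- (Rabs_Ropp (RInt k a b)). rewrite <- RIsw by auto.
    rewrite <- (Rabs_Ropp (RInt f a b)). rewrite <- RIsw by auto.
    eapply Rle_trans. apply G; try lra. apply ex_RInt_swap; auto. apply ex_RInt_swap; auto.
    apply Rle_abs.
Qed.

Lemma abs_RI_le2 (f k : R -> R) a b : a <= b -> ex_RInt f a b -> ex_RInt k a b ->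
  (forall x, a <= x <= b -> Rabs (f x) <= k x) -> Rabs (RInt f a b) <= RInt k a b.
Proof.
  intros Hab Hf Hk H.
  eapply Rle_trans. apply abs_RInt_le; auto.
  apply RInt_le; [auto| apply ex_RInt_norm; auto | auto | intros; apply H; lra].
Qed.

Notation MI := (Rbar_locally m_infty).
Notation PINF := (Rbar_locally p_infty).

Definition IG (f : R -> R) (l : R) := is_RInt_gen (V:=R_NormedModule) f MI PINF l.

Lemma win (f : R -> R) l : IG f l -> forall eps, 0 < eps -> exists A, 0 < A /\ forall a b, a < - A -> A < b ->
  ex_RInt f a b /\ Rabs (RInt f a b - l) < eps.
Proof.
  intros H eps Heps.
  assert (Hb : locally l (ball l (mkposreal eps Heps))) by apply locally_ball.
  destruct (H _ Hb) as [Q1 Q2 [M1 HQ1] [M2 HQ2] HQ].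
  exists (Rabs M1 + Rabs M2 + 1). split. assert (0 <= Rabs M1) by apply Rabs_pos. assert (0 <= Rabs M2) by apply Rabs_pos. lra.
  intros a b Ha Hb'.
  assert (Q1 a). { apply HQ1. assert (M1 >= - Rabs M1) by (assert (- M1 <= Rabs (- M1)) by apply Rle_abs; rewrite Rabs_Ropp in *; lra). assert (0 <= Rabs M2) by apply Rabs_pos. lra. }
  assert (Q2 b). { apply HQ2. assert (M2 <= Rabs M2) by apply Rle_abs. assert (0 <= Rabs M1) by apply Rabs_pos. lra. }
  destruct (HQ a b H0 H1) as [y [Hy1 Hy2]]. simpl in Hy1.
  split. exists y; auto.
  rewrite (RIu _ _ _ _ Hy1). apply Hy2.
Qed.

Lemma le_eps (x y : R) : (forall eps, 0 < eps -> x <= y + eps) -> x <= y.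
Proof.
  intros H. destruct (Rle_dec x y); auto.
  assert (H1 := H ((x - y)/2) ltac:(lra)). lra.
Qed.

Lemma IG_unique (f : R -> R) l : IG f l -> RInt_gen f MI PINF = l.
Proof. intros H. apply (is_RInt_gen_unique (V:=R_CompleteNormedModule)); auto. Qed.

Lemma GEN (f k : R -> R) lk : (forall x, continuous f x) -> (forall x, continuous k x) ->
  (forall x, Rabs (f x) <= k x) -> IG k lk -> exists l, IG f l.
Proof.
  intros Hf Hk Hfk HK.
  set (F := fun x => RInt f 0 x).
  assert (Hexf : forall a b, ex_RInt f a b) by (intros; apply exR_all; auto).
  assert (Hexk : forall a b, ex_RInt k a b) by (intros; apply exR_all; auto).
  assert (Fdiff : forall u v, Rabs (F u - F v) <= Rabs (RInt k v u)).
  { intros u v. unfold F. rewrite <- (RCh f 0 v u) by auto.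
    replace (RInt f 0 v + RInt f v u - RInt f 0 v) with (RInt f v u).
 2:{ rring. }
    apply abs_RI_le; auto. }
  assert (Kc : forall eps, 0 < eps -> exists A, 0 < A /\ forall u v, A < u -> A < v -> Rabs (RInt k v u) < eps
       /\ forall u v, u < - A -> v < - A -> Rabs (RInt k v u) < eps).
  { intros eps Heps. destruct (win k lk HK (eps/2) ltac:(lra)) as [A [HA HW]].
    exists A. split; auto. intros u v Hu Hv. split.
    - destruct (HW (-A-1) u ltac:(lra) Hu) as [_ H1]. destruct (HW (-A-1) v ltac:(lra) Hv) as [_ H2].
      assert (E : RInt k v u = (RInt k (-A-1) u - lk) - (RInt k (-A-1) v - lk)).
      { rewrite <- (RCh k (-A-1) v u) by auto. rring. }
      rewrite E. eapply Rle_lt_trans. apply Rabs_triang. rewrite Rabs_Ropp. lra.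
    - intros u' v' Hu' Hv'.
      destruct (HW u' (A+1) Hu' ltac:(lra)) as [_ H1]. destruct (HW v' (A+1) Hv' ltac:(lra)) as [_ H2].
      assert (E : RInt k v' u' = (RInt k v' (A+1) - lk) - (RInt k u' (A+1) - lk)).
      { rewrite <- (RCh k v' u' (A+1)) by auto. rring. }
      rewrite E. eapply Rle_lt_trans. apply Rabs_triang. rewrite Rabs_Ropp. lra. }
  assert (Lp : exists L, filterlim F PINF (locally L)).
  { apply (filterlim_locally_cauchy (U:=R_CompleteSpace) (F:=PINF)).
    intros eps. destruct (Kc eps (cond_pos eps)) as [A [HA HA2]].
    exists (fun x => A < x). split. exists A; auto.
    intros u v Hu Hv. unfold ball; simpl; unfold AbsRing_ball; simpl.
    unfold minus, plus, opp; simpl. eapply Rle_lt_trans. apply Fdiff. apply HA2; auto. }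
  assert (Lm : exists L, filterlim F MI (locally L)).
  { apply (filterlim_locally_cauchy (U:=R_CompleteSpace) (F:=MI)).
    intros eps. destruct (Kc eps (cond_pos eps)) as [A [HA HA2]].
    exists (fun x => x < - A). split. exists (-A); auto.
    intros u v Hu Hv. unfold ball; simpl; unfold AbsRing_ball; simpl.
    unfold minus, plus, opp; simpl. eapply Rle_lt_trans. apply Fdiff.
    apply (HA2 (A+1) (A+1) ltac:(lra) ltac:(lra)); auto. }
  destruct Lp as [Lp HLp]. destruct Lm as [Lm HLm].
  exists (Lp - Lm).
  assert (DF : forall x, Derive F x = f x).
  { intros x. unfold F. apply Derive_RInt. apply filter_forall; intros; auto. auto. }
  assert (H := is_RInt_gen_Derive (Fa := MI) (Fb := PINF) F Lm Lp).
  unfold IG. replace f with (Derive F) by (apply functional_extensionality, DF).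
  apply H; auto.
  - apply filter_forall. intros. eexists. apply (is_derive_RInt (V:=R_NormedModule)) with (a := 0).
    apply filter_forall; intros; apply RIc; auto. auto.
  - apply filter_forall. intros. rewrite (functional_extensionality _ _ DF). auto.
Qed.

Definition Sf (sig : R) (phi : R -> R) (y w : R) := g1 w * phi (y - sqrt sig * w).
Definition S (sig : R) (phi : R -> R) (y : R) := RInt_gen (Sf sig phi y) MI PINF.

Definition cb (phi : R -> R) (M : R) := (forall z, continuous phi z) /\ (forall z, Rabs (phi z) <= M).

Lemma Sf_cont sig phi y w : (forall z, continuous phi z) -> continuous (Sf sig phi y) w.
Proof.
  intros H. unfold Sf.
  apply (continuous_mult (K:=R_AbsRing)). apply g1_cont.
  apply (continuous_comp (fun w => y - sqrt sig * w) phi). 2: apply H.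
  apply edc. auto_derive. auto.
Qed.

Lemma IG_scal_g1 c : IG (fun w => c * g1 w) c.
Proof.
  assert (H := is_RInt_gen_scal (V:=R_NormedModule) (Fa:=MI) (Fb:=PINF) g1 c 1 ga_int).
  assert (E : scal c 1 = c) by (unfold scal; simpl; unfold mult; simpl; ring).
  unfold IG. exact (eq_rect _ (fun l => is_RInt_gen (V:=R_NormedModule) (fun w => c * g1 w) MI PINF l) H _ E).
Qed.

Lemma S_IG sig phi y M : cb phi M -> IG (Sf sig phi y) (S sig phi y).
Proof.
  intros [Hc Hb].
  destruct (GEN (Sf sig phi y) (fun w => M * g1 w) M) as [l Hl].
  - intros; apply Sf_cont; auto.
  - intros; apply (continuous_mult (K:=R_AbsRing)). apply continuous_const. apply g1_cont.
  - intros; unfold Sf. rewrite Rabs_mult, Rmult_comm. rewrite (Rabs_pos_eq (g1 x)) by (left; apply g1_pos).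
    apply Rmult_le_compat_r. left; apply g1_pos. apply Hb.
  - apply IG_scal_g1.
  - unfold S. rewrite (IG_unique _ _ Hl). exact Hl.
Qed.

Lemma M_nonneg phi M : cb phi M -> 0 <= M.
Proof. intros [_ H]. eapply Rle_trans. apply Rabs_pos. apply (H 0). Qed.

Lemma G_le1 R0 : RInt g1 (- R0) R0 <= 1.
Proof.
  apply le_eps. intros eps Heps.
  destruct (win g1 1 ga_int eps Heps) as [A [HA HW]].
  set (n := Rabs R0 + A + 1).
  destruct (HW (-n) n) as [_ H1]. unfold n; assert (0 <= Rabs R0) by apply Rabs_pos; lra. unfold n; assert (0 <= Rabs R0) by apply Rabs_pos; lra.
  assert (Hex : forall a b, ex_RInt g1 a b) by (intros; apply exR_all, g1_cont).
  assert (E : RInt g1 (-n) n = RInt g1 (-n) (-R0) + RInt g1 (-R0) R0 + RInt g1 R0 n).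
  { rewrite (RCh g1 (-n) (-R0) R0), (RCh g1 (-n) R0 n); auto. }
  assert (0 <= RInt g1 (-n) (-R0)).
  { apply RInt_ge_0; auto. assert (R0 <= Rabs R0) by apply Rle_abs. assert (-R0 <= Rabs R0) by (rewrite <- Rabs_Ropp; apply Rle_abs). unfold n; lra.
    intros; left; apply g1_pos. }
  assert (0 <= RInt g1 R0 n).
  { apply RInt_ge_0; auto. assert (R0 <= Rabs R0) by apply Rle_abs. unfold n; lra.
    intros; left; apply g1_pos. }
  apply Rabs_def2 in H1. lra.
Qed.

Lemma GR eps : 0 < eps -> exists R0, 0 < R0 /\ 1 - RInt g1 (- R0) R0 < eps.
Proof.
  intros Heps. destruct (win g1 1 ga_int eps Heps) as [A [HA HW]].
  exists (A + 1). split. lra. destruct (HW (-(A+1)) (A+1)) as [_ H]; try lra.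
  apply Rabs_def2 in H. lra.
Qed.

Lemma S_tail sig phi y M R0 : cb phi M -> 0 <= R0 ->
  Rabs (S sig phi y - RInt (Sf sig phi y) (- R0) R0) <= M * (1 - RInt g1 (- R0) R0).
Proof.
  intros Hcb HR0. assert (HM := M_nonneg _ _ Hcb). destruct Hcb as [Hc Hb].
  assert (HIG := S_IG sig phi y M (conj Hc Hb)).
  assert (Hex : forall a b, ex_RInt (Sf sig phi y) a b) by (intros; apply exR_all; intros; apply Sf_cont; auto).
  assert (Hexg : forall a b, ex_RInt g1 a b) by (intros; apply exR_all, g1_cont).
  apply le_eps. intros eps Heps.
  destruct (win _ _ HIG (eps/2) ltac:(lra)) as [A1 [HA1 HW1]].
  destruct (win g1 1 ga_int (eps/(2*(M+1))) ltac:(apply Rdiv_lt_0_compat; lra)) as [A2 [HA2 HW2]].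
  set (n := R0 + A1 + A2 + 1).
  destruct (HW1 (-n) n) as [_ H1]; try (unfold n; lra).
  destruct (HW2 (-n) n) as [_ H2]; try (unfold n; lra).
  set (f := Sf sig phi y) in *.
  assert (E : RInt f (-n) n - RInt f (-R0) R0 = RInt f (-n) (-R0) + RInt f R0 n).
  { rewrite <- (RCh f (-n) R0 n), <- (RCh f (-n) (-R0) R0); auto. rring. }
  assert (Eg : RInt g1 (-n) n - RInt g1 (-R0) R0 = RInt g1 (-n) (-R0) + RInt g1 R0 n).
  { rewrite <- (RCh g1 (-n) R0 n), <- (RCh g1 (-n) (-R0) R0); auto. rring. }
  assert (Hbd : forall a b, a <= b -> Rabs (RInt f a b) <= M * RInt g1 a b).
  { intros a b Hab. rewrite <- RIscal by auto. apply abs_RI_le2; auto.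
    apply exR_all; intros; apply (continuous_mult (K:=R_AbsRing)). apply continuous_const. apply g1_cont.
    intros x _. unfold f, Sf. rewrite Rabs_mult, Rmult_comm. rewrite (Rabs_pos_eq (g1 x)) by (left; apply g1_pos).
    apply Rmult_le_compat_r. left; apply g1_pos. apply Hb. }
  assert (T1 := Hbd (-n) (-R0) ltac:(unfold n; lra)).
  assert (T2 := Hbd R0 n ltac:(unfold n; lra)).
  replace (S sig phi y - RInt f (- R0) R0) with ((S sig phi y - RInt f (-n) n) + (RInt f (-n) n - RInt f (-R0) R0)) by rring.
  eapply Rle_trans. apply Rabs_triang. rewrite E.
  eapply Rle_trans. apply Rplus_le_compat_l. apply Rabs_triang.
  rewrite Rabs_minus_sym in H1.
  apply Rabs_def2 in H2.
  assert (M * (RInt g1 (-n) (-R0) + RInt g1 R0 n) <= M * (1 - RInt g1 (- R0) R0) + eps / 2).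
  { rewrite <- Eg. 
    assert (M * (RInt g1 (- n) n - 1) <= eps / 2).
    { apply Rle_trans with (M * (eps / (2 * (M + 1)))). apply Rmult_le_compat_l; lra.
      unfold Rdiv. rewrite Rinv_mult. 
      apply Rle_trans with (eps * / 2 * (M * / (M+1))). right; ring.
      rewrite <- (Rmult_1_r (eps * /2)) at 2. apply Rmult_le_compat_l. lra.
      apply Rmult_le_reg_r with (M+1). lra. rewrite Rmult_assoc, Rinv_l by lra. lra. }
    nra. }
  nra.
Qed.

Lemma S_bound sig phi y M : cb phi M -> Rabs (S sig phi y) <= M.
Proof.
  intros Hcb. assert (HM := M_nonneg _ _ Hcb).
  apply le_eps; intros eps Heps.
  assert (HM1 : 0 < M + 1) by lra.
  destruct (GR (eps / (M+1)) ltac:(apply Rdiv_lt_0_compat; lra)) as [R0 [HR0 HG]].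
  assert (T := S_tail sig phi y M R0 Hcb ltac:(lra)).
  destruct Hcb as [Hc Hb].
  assert (Hex : ex_RInt (Sf sig phi y) (-R0) R0) by (apply exR_all; intros; apply Sf_cont; auto).
  assert (I : Rabs (RInt (Sf sig phi y) (-R0) R0) <= M * RInt g1 (-R0) R0).
  { rewrite <- RIscal by (apply exR_all, g1_cont). apply abs_RI_le2; auto. lra.
    apply exR_all; intros; apply (continuous_mult (K:=R_AbsRing)). apply continuous_const. apply g1_cont.
    intros x _. unfold Sf. rewrite Rabs_mult, Rmult_comm. rewrite (Rabs_pos_eq (g1 x)) by (left; apply g1_pos).
    apply Rmult_le_compat_r. left; apply g1_pos. apply Hb. }
  replace (S sig phi y) with ((S sig phi y - RInt (Sf sig phi y) (-R0) R0) + RInt (Sf sig phi y) (-R0) R0) by rring.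
  eapply Rle_trans. apply Rabs_triang.
  assert (M * (1 - RInt g1 (- R0) R0) <= eps).
  { apply Rle_trans with (M * (eps / (M+1))). apply Rmult_le_compat_l; lra.
    apply Rle_trans with ((M+1) * (eps / (M+1))). apply Rmult_le_compat_r. left; apply Rdiv_lt_0_compat; lra. lra.
    right; field; lra. }
  lra.
Qed.

Lemma G_ge0 R0 : 0 <= R0 -> 0 <= RInt g1 (- R0) R0.
Proof. intros. apply RInt_ge_0. lra. apply exR_all, g1_cont. intros; left; apply g1_pos. Qed.

Lemma S_loc sig phi y M R0 eps : cb phi M -> 0 <= R0 -> 0 <= eps ->
  (forall w, - R0 <= w <= R0 -> Rabs (phi (y - sqrt sig * w)) <= eps) ->
  Rabs (S sig phi y) <= eps + M * (1 - RInt g1 (- R0) R0).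
Proof.
  intros Hcb HR0 He Hloc.
  assert (T := S_tail sig phi y M R0 Hcb HR0).
  destruct Hcb as [Hc Hb].
  assert (Hex : ex_RInt (Sf sig phi y) (-R0) R0) by (apply exR_all; intros; apply Sf_cont; auto).
  assert (I : Rabs (RInt (Sf sig phi y) (-R0) R0) <= eps * RInt g1 (-R0) R0).
  { rewrite <- RIscal by (apply exR_all, g1_cont). apply abs_RI_le2; auto. lra.
    apply exR_all; intros; apply (continuous_mult (K:=R_AbsRing)). apply continuous_const. apply g1_cont.
    intros x Hx. unfold Sf. rewrite Rabs_mult, Rmult_comm. rewrite (Rabs_pos_eq (g1 x)) by (left; apply g1_pos).
    apply Rmult_le_compat_r. left; apply g1_pos. apply Hloc; auto. }
  assert (G1 := G_le1 R0). assert (G0 := G_ge0 R0 HR0).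
  replace (S sig phi y) with ((S sig phi y - RInt (Sf sig phi y) (-R0) R0) + RInt (Sf sig phi y) (-R0) R0) by rring.
  eapply Rle_trans. apply Rabs_triang.
  assert (eps * RInt g1 (- R0) R0 <= eps) by nra.
  lra.
Qed.

Lemma S_minus sig phi1 phi2 y M1 M2 : cb phi1 M1 -> cb phi2 M2 ->
  S sig (fun z => phi1 z - phi2 z) y = S sig phi1 y - S sig phi2 y.
Proof.
  intros H1 H2.
  assert (I1 := S_IG sig phi1 y M1 H1). assert (I2 := S_IG sig phi2 y M2 H2).
  assert (I := is_RInt_gen_minus (V:=R_NormedModule) (Fa:=MI) (Fb:=PINF) _ _ _ _ I1 I2).
  unfold S at 1. apply IG_unique.
  replace (Sf sig (fun z => phi1 z - phi2 z) y) with (fun w => minus (Sf sig phi1 y w) (Sf sig phi2 y w)).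
  exact I.
  apply functional_extensionality; intros w. unfold Sf, minus, plus, opp; simpl. ring.
Qed.

Lemma S_const sig c y : S sig (fun _ => c) y = c.
Proof.
  unfold S. apply IG_unique.
  replace (Sf sig (fun _ => c) y) with (fun w => c * g1 w). apply IG_scal_g1.
  apply functional_extensionality; intros w. unfold Sf. ring.
Qed.

Lemma IG_cv (f : R -> R) l c y : IG f l -> 0 < c -> IG (fun z => / c * f ((y - z) / c)) l.
Proof.
  intros H Hc P HP.
  destruct (H P HP) as [Q1 Q2 [M1 HQ1] [M2 HQ2] HQ].
  apply Filter_prod with (fun a => a < y - c * M2) (fun b => y - c * M1 < b).
  - exists (y - c * M2). auto.
  - exists (y - c * M1). auto.
  - intros a b Ha Hb. simpl.
    assert (Q1 ((y - b) / c)). { apply HQ1. apply Rmult_lt_reg_r with c; auto. unfold Rdiv. rewrite Rmult_assoc, Rinv_l by lra. lra. }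
    assert (Q2 ((y - a) / c)). { apply HQ2. apply Rmult_lt_reg_r with c; auto. unfold Rdiv. rewrite Rmult_assoc, Rinv_l by lra. lra. }
    destruct (HQ _ _ H0 H1) as [y' [Hy1 Hy2]]. simpl in Hy1.
    exists y'. split; auto.
    apply is_RInt_swap in Hy1.
    assert (Hy3 : is_RInt f ((- / c) * a + y / c) ((- / c) * b + y / c) (opp y')).
    { replace ((- / c) * a + y / c) with ((y - a) / c) by (field; lra).
      replace ((- / c) * b + y / c) with ((y - b) / c) by (field; lra). exact Hy1. }
    apply (is_RInt_comp_lin f) in Hy3. apply is_RInt_opp in Hy3.
    rewrite opp_opp in Hy3.
    eapply is_RInt_ext; [| exact Hy3]. intros x _. simpl.
    unfold opp, scal; simpl; unfold mult; simpl.
    replace ((y - x) / c) with (- / c * x + y / c) by (field; lra). ring.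
Qed.

Definition Econv (sig : R) (phi : R -> R) (y : R) :=
  if Rlt_dec 0 sig then conv (gauss sig) phi y else phi y.

Lemma Rep sig phi y M : cb phi M -> 0 <= sig -> Econv sig phi y = S sig phi y.
Proof.
  intros Hcb Hs. unfold Econv. destruct (Rlt_dec 0 sig) as [Hp|Hn].
  - unfold conv. apply IG_unique.
    assert (Hc : 0 < sqrt sig) by (apply sqrt_lt_R0; auto).
    assert (H := IG_cv _ _ (sqrt sig) y (S_IG sig phi y M Hcb) Hc).
    replace (fun y0 => gauss sig (y - y0) * phi y0) with (fun z => / sqrt sig * Sf sig phi y ((y - z) / sqrt sig)).
    exact H.
    apply functional_extensionality; intros z. unfold Sf, g1, gauss.
    replace (y - sqrt sig * ((y - z) / sqrt sig)) with z by (field; lra).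
    assert (E4 : sqrt (4 * PI * sig) = sqrt (4 * PI * 1) * sqrt sig).
    { rewrite Rmult_1_r. apply sqrt_mult. assert (0 < PI) by apply PI_RGT_0. lra. lra. }
    rewrite E4.
    assert (Es : sqrt sig * sqrt sig = sig) by (apply sqrt_sqrt; lra).
    replace (((y - z) / sqrt sig) ^ 2) with ((y-z)^2 / sig)
      by (unfold Rdiv; rewrite Rpow_mult_distr, pow_inv; f_equal; f_equal; simpl; rewrite Rmult_1_r; auto).
    replace (- ((y - z) ^ 2 / sig) / (4 * 1)) with (- (y - z) ^ 2 / (4 * sig)) by (field; lra).
    assert (0 < sqrt (4 * PI * 1)). { apply sqrt_lt_R0. assert (0 < PI) by apply PI_RGT_0. lra. }
    field. lra.
  - assert (sig = 0) by lra. subst sig.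
    unfold S. symmetry. apply IG_unique.
    replace (Sf 0 phi y) with (fun w => phi y * g1 w). apply IG_scal_g1.
    apply functional_extensionality; intros w. unfold Sf. rewrite sqrt_0. 
    replace (y - 0 * w) with y by ring. ring.
Qed.

Lemma abs_le_split x a : Rabs x <= a -> - a <= x <= a.
Proof. unfold Rabs; destruct (Rcase_abs x); intros; lra. Qed.

Lemma g1_le1 w : g1 w <= 1.
Proof.
  unfold g1, gauss. assert (0 < PI) by apply PI_RGT_0.
  assert (H1 : 1 <= sqrt (4 * PI * 1)).
  { apply Rle_trans with (sqrt 1). rewrite sqrt_1; lra. apply sqrt_le_1_alt. assert (1 < PI / 2) by apply PI2_1. lra. }
  assert (H2 : exp (- w ^ 2 / (4 * 1)) <= 1).
  { apply Rle_trans with (exp 0); [| rewrite exp_0; lra]. apply exp_le. assert (0 <= w ^ 2) by (apply pow2_ge_0). 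
    unfold Rdiv. assert (0 <= w^2 * / (4*1)) by (apply Rmult_le_pos; [lra | left; apply Rinv_0_lt_compat; lra]). 
    replace (- w ^ 2 * / (4 * 1)) with (- (w ^ 2 * / (4 * 1))) by ring. lra. }
  unfold Rdiv. apply Rle_trans with (1 * / sqrt (4 * PI * 1)).
  apply Rmult_le_compat_r. left; apply Rinv_0_lt_compat; lra. exact H2.
  rewrite Rmult_1_l. apply Rle_trans with (/ 1). apply Rinv_le_contravar; lra. rewrite Rinv_1; lra.
Qed.

Lemma c2d_cont1 (f : R -> R -> R) x y : continuity_2d_pt f x y -> continuous (f x) y.
Proof.
  intros H. apply continuity_pt_filterlim. apply continuity_pt_locally. intros eps.
  destruct (H eps) as [d Hd]. exists d. intros u Hu. apply Hd.
  rewrite Rminus_eq_0, Rabs_R0. apply cond_pos. exact Hu.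
Qed.

Lemma cont_sqrt_comp (sig : R -> R) s : continuity_pt sig s -> 0 <= sig s -> continuity_pt (fun t => sqrt (sig t)) s.
Proof. intros H1 H2. apply (continuity_pt_comp sig sqrt); auto. apply continuity_pt_sqrt; auto. Qed.

Lemma Scont (phi : R -> R -> R) (sig : R -> R) M :
  (forall s z, continuity_2d_pt phi s z) -> (forall s z, Rabs (phi s z) <= M) ->
  (forall s, continuity_pt sig s) -> (forall s, 0 <= sig s) ->
  forall s0 y0, continuity_2d_pt (fun s y => S (sig s) (phi s) y) s0 y0.
Proof.
  intros Hc Hb Hsc Hs0 s0 y0 eps.
  assert (Hcb : forall s, cb (phi s) M).
  { intros s; split. intros z; apply c2d_cont1, Hc. intros; apply Hb. }
  assert (HM := M_nonneg _ _ (Hcb s0)).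
  destruct (GR (eps / (4 * (M + 1)))) as [R0 [HR0 HG]].
  { apply Rdiv_lt_0_compat. apply cond_pos. lra. }
  set (K := 1 + R0 * (sqrt (sig s0) + 1)).
  assert (Hsq0 : 0 <= sqrt (sig s0)) by apply sqrt_pos.
  set (eps' := eps / (4 * (2 * R0 + 1))).
  assert (Heps' : 0 < eps') by (unfold eps'; apply Rdiv_lt_0_compat; [apply cond_pos| lra]).
  destruct (uniform_continuity_2d phi (s0 - 1) (s0 + 1) (y0 - K) (y0 + K)
              (fun x y _ _ => Hc x y) (mkposreal eps' Heps')) as [du Hdu].
  set (eta := Rmin 1 (du / (2 * (R0 + 1)))).
  assert (Heta : 0 < eta) by (unfold eta; apply Rmin_pos; [lra| apply Rdiv_lt_0_compat; [apply cond_pos| lra]]).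
  destruct (proj1 (continuity_pt_locally _ s0) (cont_sqrt_comp sig s0 (Hsc s0) (Hs0 s0)) (mkposreal eta Heta)) as [ds Hds].
  assert (Hdpos : 0 < Rmin 1 (Rmin (du / 2) ds)).
  { apply Rmin_pos. lra. apply Rmin_pos. apply Rdiv_lt_0_compat. apply cond_pos. lra. apply cond_pos. }
  exists (mkposreal _ Hdpos). intros s y Hs Hy. simpl in Hs, Hy.
  assert (Hs1 : Rabs (s - s0) < 1) by (eapply Rlt_le_trans; [exact Hs| apply Rmin_l]).
  assert (Hs2 : Rabs (s - s0) < du / 2) by (eapply Rlt_le_trans; [exact Hs| eapply Rle_trans; [apply Rmin_r| apply Rmin_l]]).
  assert (Hs3 : Rabs (s - s0) < ds) by (eapply Rlt_le_trans; [exact Hs| eapply Rle_trans; [apply Rmin_r| apply Rmin_r]]).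
  assert (Hy1 : Rabs (y - y0) < 1) by (eapply Rlt_le_trans; [exact Hy| apply Rmin_l]).
  assert (Hy2 : Rabs (y - y0) < du / 2) by (eapply Rlt_le_trans; [exact Hy| eapply Rle_trans; [apply Rmin_r| apply Rmin_l]]).
  assert (Hsq : Rabs (sqrt (sig s) - sqrt (sig s0)) < eta) by (apply Hds; exact Hs3).
  assert (Heta1 : eta <= 1) by apply Rmin_l.
  assert (Heta2 : eta <= du / (2 * (R0 + 1))) by apply Rmin_r.
  set (f1 := Sf (sig s) (phi s) y). set (f0 := Sf (sig s0) (phi s0) y0).
  assert (Hex1 : ex_RInt f1 (-R0) R0) by (apply exR_all; intros; apply Sf_cont, Hcb).
  assert (Hex0 : ex_RInt f0 (-R0) R0) by (apply exR_all; intros; apply Sf_cont, Hcb).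
  assert (T1 := S_tail (sig s) (phi s) y M R0 (Hcb s) ltac:(lra)).
  assert (T0 := S_tail (sig s0) (phi s0) y0 M R0 (Hcb s0) ltac:(lra)).
  fold f1 in T1. fold f0 in T0.
  assert (Mid : Rabs (RInt f1 (-R0) R0 - RInt f0 (-R0) R0) <= (R0 - - R0) * eps').
  { rewrite <- RImin by auto. apply abs_RInt_le_const. lra.
    apply (ex_RInt_minus (V:=R_NormedModule) f1 f0); auto.
    intros w Hw. unfold f1, f0, Sf.
    replace (g1 w * phi s (y - sqrt (sig s) * w) - g1 w * phi s0 (y0 - sqrt (sig s0) * w))
      with (g1 w * (phi s (y - sqrt (sig s) * w) - phi s0 (y0 - sqrt (sig s0) * w))) by ring.
    rewrite Rabs_mult, Rabs_pos_eq by (left; apply g1_pos).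
    apply Rle_trans with (1 * Rabs (phi s (y - sqrt (sig s) * w) - phi s0 (y0 - sqrt (sig s0) * w))).
    apply Rmult_le_compat_r. apply Rabs_pos. apply g1_le1. rewrite Rmult_1_l.
    assert (Hw' : Rabs w <= R0) by (apply Rabs_le; lra).
    assert (Hsqs : 0 <= sqrt (sig s)) by apply sqrt_pos.
    assert (Hsqs' : sqrt (sig s) <= sqrt (sig s0) + 1) by (apply Rabs_def2 in Hsq; lra).
    left. apply (Hdu s0 (y0 - sqrt (sig s0) * w) s (y - sqrt (sig s) * w)).
    - lra.
    - split.
      + assert (sqrt (sig s0) * w <= sqrt (sig s0) * R0) by (apply Rmult_le_compat_l; lra).
        assert (sqrt (sig s0) * R0 <= R0 * (sqrt (sig s0) + 1)) by nra. unfold K. lra.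
      + assert (- (sqrt (sig s0) * R0) <= sqrt (sig s0) * w) by nra.
        assert (sqrt (sig s0) * R0 <= R0 * (sqrt (sig s0) + 1)) by nra. unfold K. lra.
    - apply Rabs_def2 in Hs1. lra.
    - apply Rabs_def2 in Hy1.
      assert (Rabs (sqrt (sig s) * w) <= (sqrt (sig s0) + 1) * R0).
      { rewrite Rabs_mult, Rabs_pos_eq by auto. apply Rmult_le_compat; auto; apply Rabs_pos. }
      apply abs_le_split in H. unfold K. split; nra.
    - assert (0 < du) by apply cond_pos. lra.
    - simpl.
      replace (y - sqrt (sig s) * w - (y0 - sqrt (sig s0) * w)) with ((y - y0) - (sqrt (sig s) - sqrt (sig s0)) * w) by ring.
      eapply Rle_lt_trans. apply Rabs_triang. rewrite Rabs_Ropp, Rabs_mult.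
      assert (Rabs (sqrt (sig s) - sqrt (sig s0)) * Rabs w <= eta * R0).
      { apply Rmult_le_compat; try apply Rabs_pos; lra. }
      assert (eta * R0 <= du / 2).
      { apply Rle_trans with (du / (2 * (R0 + 1)) * R0). apply Rmult_le_compat_r; lra.
        apply Rle_trans with (du / (2 * (R0 + 1)) * (R0 + 1)). apply Rmult_le_compat_l. left; apply Rdiv_lt_0_compat. apply cond_pos. lra. lra.
        right. field. lra. }
      lra. }
  simpl.
  replace (S (sig s) (phi s) y - S (sig s0) (phi s0) y0) with
    ((S (sig s) (phi s) y - RInt f1 (-R0) R0) + (RInt f1 (-R0) R0 - RInt f0 (-R0) R0) - (S (sig s0) (phi s0) y0 - RInt f0 (-R0) R0)) by rring.
  eapply Rle_lt_trans. apply Rabs_triang. rewrite Rabs_Ropp.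
  eapply Rle_lt_trans. apply Rplus_le_compat_r. apply Rabs_triang.
  assert (Ht : M * (1 - RInt g1 (- R0) R0) <= eps / 4).
  { assert (G1 := G_le1 R0).
    apply Rle_trans with ((M + 1) * (eps / (4 * (M + 1)))).
    apply Rmult_le_compat; lra. right. field. lra. }
  assert (Hm : (R0 - - R0) * eps' <= eps / 4).
  { unfold eps'. apply Rle_trans with ((2 * R0 + 1) * (eps / (4 * (2 * R0 + 1)))).
    apply Rmult_le_compat_r. left; apply Rdiv_lt_0_compat; [apply cond_pos| lra]. lra.
    right. field. lra. }
  assert (0 < eps) by apply cond_pos.
  lra.
Qed.


Lemma cpt (f : R -> R) x : continuous f x -> continuity_pt f x.
Proof. intros H. apply continuity_pt_filterlim. exact H. Qed.

Lemma cpt' (f : R -> R) x : continuity_pt f x -> continuous f x.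
Proof. intros H. apply continuity_pt_filterlim. exact H. Qed.

Lemma Rmax0_lip a b : Rabs (Rmax 0 a - Rmax 0 b) <= Rabs (a - b).
Proof.
  unfold Rmax. destruct (Rle_dec 0 a); destruct (Rle_dec 0 b);
  unfold Rabs; repeat destruct Rcase_abs; lra.
Qed.

Lemma cont_Rmax0 (f : R -> R) x : continuity_pt f x -> continuity_pt (fun t => Rmax 0 (f t)) x.
Proof.
  intros H. apply continuity_pt_locally. intros eps.
  destruct (proj1 (continuity_pt_locally _ _) H eps) as [d Hd]. exists d. intros y Hy.
  eapply Rle_lt_trans. apply Rmax0_lip. apply Hd, Hy.
Qed.

Lemma c2_jcont (w : R -> R -> R) : jcont_on w -> forall s z, continuity_2d_pt (fun s z => w (Rmax 0 s) z) s z.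
Proof.
  intros H s z eps.
  destruct (H (Rmax 0 s) z (Rmax_l 0 s) eps (cond_pos eps)) as [d [Hd Hd2]].
  exists (mkposreal d Hd). intros s' z' H1 H2. simpl in *.
  apply Hd2. apply Rmax_l. eapply Rle_lt_trans. apply Rmax0_lip. auto. auto.
Qed.



Lemma c2_comp1 (f : R -> R -> R) (g : R -> R) s z :
  continuity_2d_pt f (g s) z -> continuity_pt g s -> continuity_2d_pt (fun s z => f (g s) z) s z.
Proof.
  intros Hf Hg eps. destruct (Hf eps) as [d Hd].
  destruct (proj1 (continuity_pt_locally _ _) Hg d) as [d2 Hd2].
  assert (Hm : 0 < Rmin d d2) by (apply Rmin_pos; apply cond_pos).
  exists (mkposreal _ Hm). intros u v Hu Hv. simpl in *. apply Hd. apply Hd2.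
  eapply Rlt_le_trans. exact Hu. apply Rmin_r.
  eapply Rlt_le_trans. exact Hv. apply Rmin_l.
Qed.

Lemma c2_s (a : R -> R) s z : continuity_pt a s -> continuity_2d_pt (fun s _ => a s) s z.
Proof.
  intros H eps. destruct (proj1 (continuity_pt_locally _ _) H eps) as [d Hd].
  exists d. intros u v Hu Hv. apply Hd, Hu.
Qed.

Lemma c2_y (f : R -> R -> R) y s z : continuity_2d_pt f s z -> z = y -> continuity_2d_pt (fun s _ => f s y) s z.
Proof.
  intros H E eps. subst. destruct (H eps) as [d Hd]. exists d. intros u v Hu Hv. apply Hd. auto.
  rewrite Rminus_eq_0, Rabs_R0. apply cond_pos.
Qed.

Lemma per_nat (f : R -> R) T : periodic T f -> forall n x, f (x + INR n * T) = f x.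
Proof.
  intros H n. induction n; intros x. simpl. f_equal. ring.
  rewrite S_INR. replace (x + (INR n + 1) * T) with ((x + INR n * T) + T) by ring.
  rewrite H. apply IHn.
Qed.

Lemma per_Z (f : R -> R) T : periodic T f -> forall k x, f (x + IZR k * T) = f x.
Proof.
  intros H k x. destruct (Z.le_gt_cases 0 k).
  - rewrite <- (Z2Nat.id k) by lia. rewrite <- INR_IZR_INZ. apply per_nat; auto.
  - assert (E : k = (- Z.of_nat (Z.to_nat (- k)))%Z) by lia.
    rewrite E, opp_IZR, <- INR_IZR_INZ.
    rewrite <- (per_nat f T H (Z.to_nat (-k)) (x + - INR (Z.to_nat (- k)) * T)).
    f_equal. ring.
Qed.

Lemma per_reduce (f : R -> R) T : periodic T f -> 0 < T -> forall t, exists t', 0 <= t' <= T /\ f t = f t'.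
Proof.
  intros H HT t. destruct (archimed (t / T)) as [H1 H2].
  set (k := (up (t / T) - 1)%Z).
  exists (t - IZR k * T). split.
  - unfold k. rewrite minus_IZR. simpl.
    assert (E : t = (t / T) * T) by (field; lra).
    split.
    + apply Rle_trans with ((t / T - (IZR (up (t / T)) - 1)) * T).
      apply Rmult_le_pos; lra. right. field. lra.
    + apply Rle_trans with ((t / T - (IZR (up (t / T)) - 1)) * T).
      right. field. lra. apply Rle_trans with (1 * T); [apply Rmult_le_compat_r; lra| lra].
  - rewrite <- (per_Z f T H k (t - IZR k * T)). f_equal. ring.
Qed.

Lemma per_max (f : R -> R) T : periodic T f -> 0 < T -> (forall t, continuous f t) ->
  exists M, forall t, f t <= M.
Proof.
  intros H HT Hc. destruct (continuity_ab_maj f 0 T ltac:(lra) (fun c _ => cpt f c (Hc c))) as [Mx [HM _]].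
  exists (f Mx). intros t. destruct (per_reduce f T H HT t) as [t' [Ht' E]]. rewrite E. apply HM; auto.
Qed.

Lemma per_min (f : R -> R) T : periodic T f -> 0 < T -> (forall t, continuous f t) ->
  exists t0, forall t, f t0 <= f t.
Proof.
  intros H HT Hc. destruct (continuity_ab_min f 0 T ltac:(lra) (fun c _ => cpt f c (Hc c))) as [mx [HM _]].
  exists mx. intros t. destruct (per_reduce f T H HT t) as [t' [Ht' E]]. rewrite E. apply HM; auto.
Qed.

Lemma per_derive (f : R -> R) T : periodic T f -> (forall t, ex_derive f t) -> periodic T (Derive f).
Proof.
  intros H Hd t.
  assert (E : f = fun x => f (x + T)) by (apply functional_extensionality; intros; rewrite H; auto).
  rewrite E at 2. symmetry. apply is_derive_unique.
  replace (Derive f (t + T)) with (1 * Derive f (t + T)) by ring.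
  apply (is_derive_comp f (fun x => x + T)). apply Derive_correct, Hd.
  auto_derive; auto.
Qed.

Lemma h_bound (h : R -> R) : (forall z, continuous h z) -> is_lim h p_infty 0 ->
  exists Hb, 0 <= Hb /\ forall z, 0 <= z -> Rabs (h z) <= Hb.
Proof.
  intros Hc Hl.
  assert (Hl' := Hl (fun y => Rabs y < 1)).
  destruct Hl' as [A HA].
  { exists (mkposreal 1 Rlt_0_1). intros y Hy. unfold ball in Hy; simpl in Hy; unfold AbsRing_ball in Hy; simpl in Hy.
    unfold minus, plus, opp in Hy; simpl in Hy. rewrite Ropp_0, Rplus_0_r in Hy. exact Hy. }
  set (A' := Rmax A 0).
  destruct (continuity_ab_maj (fun z => Rabs (h z)) 0 A' ltac:(apply Rmax_r)) as [Mx [HM _]].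
  { intros c _. apply continuity_pt_comp with (f1 := h) (f2 := Rabs). apply cpt, Hc. apply Rcontinuity_abs. }
  exists (Rmax 1 (Rabs (h Mx))). split. apply Rle_trans with 1. lra. apply Rmax_l.
  intros z Hz. destruct (Rle_dec z A').
  - apply Rle_trans with (Rabs (h Mx)). apply HM; auto. apply Rmax_r.
  - apply Rle_trans with 1. left. apply HA. unfold A' in n. assert (A <= Rmax A 0) by apply Rmax_l. simpl. lra. apply Rmax_l.
Qed.

Lemma h_unif (h : R -> R) : (forall z, continuous h z) -> is_lim h p_infty 0 ->
  forall eps, 0 < eps -> exists d, 0 < d /\ forall z1 z2, 0 <= z1 -> 0 <= z2 -> Rabs (z1 - z2) < d -> Rabs (h z1 - h z2) < eps.
Proof.
  intros Hc Hl eps Heps.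
  destruct (Hl (fun y => Rabs y < eps / 2)) as [A HA].
  { exists (mkposreal (eps/2) ltac:(lra)). intros y Hy. unfold ball in Hy; simpl in Hy; unfold AbsRing_ball in Hy; simpl in Hy.
    unfold minus, plus, opp in Hy; simpl in Hy. rewrite Ropp_0, Rplus_0_r in Hy. exact Hy. }
  set (A' := Rmax A 0 + 1).
  assert (HU := Heine h (fun z => 0 <= z <= A' + 1) (compact_P3 0 (A' + 1)) (fun z _ => cpt h z (Hc z))).
  destruct (HU (mkposreal eps Heps)) as [d Hd].
  exists (Rmin d 1). split. apply Rmin_pos. apply cond_pos. lra.
  intros z1 z2 H1 H2 H12.
  assert (A <= Rmax A 0) by apply Rmax_l. assert (0 <= Rmax A 0) by apply Rmax_r.
  assert (Hd1 : Rabs (z1 - z2) < 1) by (eapply Rlt_le_trans; [exact H12| apply Rmin_r]).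
  apply Rabs_def2 in Hd1.
  destruct (Rle_dec z1 A') as [Ha|Ha].
  - apply Hd. split; lra. split; lra. eapply Rlt_le_trans. exact H12. apply Rmin_l.
  - assert (Rabs (h z1) < eps / 2) by (apply HA; unfold A' in Ha; lra).
    assert (Rabs (h z2) < eps / 2) by (apply HA; unfold A' in Ha; lra).
    replace (h z1 - h z2) with (h z1 + - h z2) by ring. eapply Rle_lt_trans. apply Rabs_triang.
    rewrite Rabs_Ropp. lra.
Qed.


Lemma evol_Econv D d t s phi x : evol D d t s phi x = exp (- RInt d s t) * Econv (RInt D s t) phi x.
Proof. reflexivity. Qed.

Lemma cont_RI (f : R -> R) a x : (forall z, continuous f z) -> continuity_pt (fun y => RInt f a y) x.
Proof.
  intros Hf. apply derivable_continuous_pt. exists (f x). apply is_derive_Reals.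
  apply (is_derive_RInt (V:=R_NormedModule)) with (a := a).
  apply filter_forall; intros; apply RIc, exR_all; auto. auto.
Qed.

Lemma c2_to_s (f : R -> R -> R) s y : continuity_2d_pt f s y -> continuity_pt (fun s => f s y) s.
Proof.
  intros H. apply continuity_pt_locally. intros eps. destruct (H eps) as [d Hd]. exists d.
  intros u Hu. apply Hd. exact Hu. rewrite Rminus_eq_0, Rabs_R0. apply cond_pos.
Qed.

Lemma RI_ge0 (f : R -> R) a b : a <= b -> (forall z, continuous f z) -> (forall z, 0 <= f z) -> 0 <= RInt f a b.
Proof. intros. apply RInt_ge_0; auto. apply exR_all; auto. Qed.

Lemma RI_le_const (f : R -> R) a b M : a <= b -> (forall z, continuous f z) -> (forall z, f z <= M) -> RInt f a b <= M * (b - a).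
Proof.
  intros. rewrite <- RIconst. apply RInt_le; auto. apply exR_all; auto. apply ex_RInt_const.
Qed.

Lemma RI_ge_const (f : R -> R) a b M : a <= b -> (forall z, continuous f z) -> (forall z, M <= f z) -> M * (b - a) <= RInt f a b.
Proof.
  intros. rewrite <- RIconst. apply RInt_le; auto. apply ex_RInt_const. apply exR_all; auto.
Qed.

Section Model.
Variables (DI dI tau p h : R -> R).
Hypothesis HDIc : forall t, continuous DI t.
Hypothesis HdIc : forall t, continuous dI t.
Hypothesis Htauc : forall t, continuous tau t.
Hypothesis Hdtc : forall t, continuous (Derive tau) t.
Hypothesis Hpc : forall t, continuous p t.
Hypothesis Hhc : forall z, continuous h z.
Hypothesis HDI0 : forall t, 0 <= DI t.
Hypothesis HdI0 : forall t, 0 <= dI t.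
Hypothesis Htau0 : forall t, 0 < tau t.
Hypothesis Hpz : forall s, 0 <= s -> s - tau s < 0 -> p (s - tau s) = 0.
Variables (Pm Hb Ct : R).
Hypothesis Hp : forall t, 0 <= p t <= Pm.
Hypothesis Hhb : forall z, 0 <= z -> Rabs (h z) <= Hb.
Hypothesis HCt : forall t, Rabs (1 - Derive tau t) <= Ct.

Definition wok (w : R -> R -> R) := jcont_on w /\ (forall t x, 0 <= t -> 0 <= w t x).

Definition sigp s := Rmax 0 (RInt DI (s - tau s) s).
Definition ee s := exp (- RInt dI (s - tau s) s).
Definition psi (w : R -> R -> R) s z := p (s - tau s) * h (w (Rmax 0 (s - tau s)) z).
Definition Fw (w : R -> R -> R) s y :=
  p s * h (w (Rmax 0 s) y) - (1 - Derive tau s) * ee s * S (sigp s) (psi w s) y.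

Lemma RI_split (f : R -> R) a b : (forall z, continuous f z) -> RInt f a b = RInt f 0 b - RInt f 0 a.
Proof.
  intros Hf. rewrite <- (RCh f 0 a b) by (apply exR_all; auto). rring.
Qed.

Lemma cont_sdiff (f : R -> R) s : (forall z, continuous f z) -> continuity_pt (fun s => RInt f (s - tau s) s) s.
Proof.
  intros Hf.
  apply continuity_pt_ext with (fun s => RInt f 0 s - RInt f 0 (s - tau s)).
  { intros; symmetry; apply RI_split; auto. }
  apply continuity_pt_minus. apply cont_RI; auto.
  apply (continuity_pt_comp (fun s => s - tau s) (fun y => RInt f 0 y)).
  apply continuity_pt_minus. apply derivable_continuous_pt, derivable_pt_id. apply cpt, Htauc.
  apply cont_RI; auto.
Qed.

Lemma sigp_cont s : continuity_pt sigp s.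
Proof. unfold sigp. apply cont_Rmax0. apply cont_sdiff; auto. Qed.

Lemma sigp_ge0 s : 0 <= sigp s.
Proof. apply Rmax_l. Qed.

Lemma ee_cont s : continuity_pt ee s.
Proof.
  unfold ee. apply (continuity_pt_comp (fun s => - RInt dI (s - tau s) s) exp).
  apply continuity_pt_opp. apply cont_sdiff; auto. apply derivable_continuous_pt, derivable_pt_exp.
Qed.

Lemma ee_le1 s : 0 <= ee s <= 1.
Proof.
  unfold ee. split. left; apply exp_pos.
  apply Rle_trans with (exp 0); [| rewrite exp_0; lra]. apply exp_le.
  assert (0 <= RInt dI (s - tau s) s). { apply RI_ge0; auto. assert (0 < tau s) by auto. lra. }
  lra.
Qed.

Lemma h_cpt z : continuity_pt h z.
Proof. apply cpt, Hhc. Qed.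

Lemma psi_c2 w : wok w -> forall s z, continuity_2d_pt (psi w) s z.
Proof.
  intros [Hw _] s z. unfold psi.
  apply continuity_2d_pt_mult.
  - apply c2_s. apply (continuity_pt_comp (fun s => s - tau s) p).
    apply continuity_pt_minus. apply derivable_continuous_pt, derivable_pt_id. apply cpt, Htauc.
    apply cpt, Hpc.
  - apply continuity_1d_2d_pt_comp with (f := h). apply h_cpt.
    apply c2_comp1 with (f := fun s z => w (Rmax 0 s) z) (g := fun s => s - tau s).
    apply c2_jcont; auto.
    apply continuity_pt_minus. apply derivable_continuous_pt, derivable_pt_id. apply cpt, Htauc.
Qed.

Lemma Hb0 : 0 <= Hb.
Proof. eapply Rle_trans. apply Rabs_pos. apply (Hhb 0). lra. Qed.

Lemma Pm0 : 0 <= Pm.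
Proof. destruct (Hp 0); lra. Qed.

Lemma psi_b w : wok w -> forall s z, Rabs (psi w s z) <= Pm * Hb.
Proof.
  intros [_ Hw] s z. unfold psi. rewrite Rabs_mult.
  apply Rmult_le_compat; try apply Rabs_pos.
  - rewrite Rabs_pos_eq; apply Hp.
  - apply Hhb. apply Hw. apply Rmax_l.
Qed.

Definition BF := Pm * Hb + Ct * (Pm * Hb).

Lemma Fw_c2 w : wok w -> forall s y, continuity_2d_pt (Fw w) s y.
Proof.
  intros Hw s y. unfold Fw.
  apply continuity_2d_pt_minus.
  - apply continuity_2d_pt_mult. apply c2_s, cpt, Hpc.
    apply continuity_1d_2d_pt_comp with (f := h). apply h_cpt.
    apply c2_jcont, Hw.
  - apply continuity_2d_pt_mult. apply c2_s.
    apply continuity_pt_mult. apply continuity_pt_minus. apply continuity_pt_const; intros a b; auto.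
    apply cpt, Hdtc. apply ee_cont.
    apply (Scont (psi w) sigp (Pm * Hb)).
    apply psi_c2; auto. apply psi_b; auto. apply sigp_cont. apply sigp_ge0.
Qed.

Lemma psi_cb w s : wok w -> cb (psi w s) (Pm * Hb).
Proof. intros Hw. split. intros z; apply c2d_cont1, psi_c2; auto. intros; apply psi_b; auto. Qed.

Lemma Ct0 : 0 <= Ct.
Proof. eapply Rle_trans. apply Rabs_pos. apply (HCt 0). Qed.

Lemma Fw_b w : wok w -> forall s y, Rabs (Fw w s y) <= BF.
Proof.
  intros Hw s y. unfold Fw, BF.
  replace (p s * h (w (Rmax 0 s) y) - (1 - Derive tau s) * ee s * S (sigp s) (psi w s) y)
    with (p s * h (w (Rmax 0 s) y) + - ((1 - Derive tau s) * (ee s * S (sigp s) (psi w s) y))) by ring.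
  eapply Rle_trans. apply Rabs_triang. rewrite Rabs_Ropp.
  apply Rplus_le_compat.
  - rewrite Rabs_mult. apply Rmult_le_compat; try apply Rabs_pos.
    rewrite Rabs_pos_eq; apply Hp. apply Hhb. apply (proj2 Hw). apply Rmax_l.
  - rewrite Rabs_mult. apply Rmult_le_compat; try apply Rabs_pos. apply HCt.
    rewrite Rabs_mult. rewrite (Rabs_pos_eq (ee s)) by apply ee_le1.
    rewrite <- (Rmult_1_l (Pm * Hb)). apply Rmult_le_compat; try apply Rabs_pos. apply ee_le1. apply ee_le1.
    apply (S_bound _ _ _ _ (psi_cb w s Hw)).
Qed.

Lemma Fw_cb w s : wok w -> cb (Fw w s) BF.
Proof. intros Hw. split. intros z; apply c2d_cont1, Fw_c2; auto. intros; apply Fw_b; auto. Qed.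

Lemma Fw_eq w s y : wok w -> 0 <= s ->
  p s * h (w s y) - Rop DI dI tau p h s (w (s - tau s)) y = Fw w s y.
Proof.
  intros Hw Hs. unfold Fw, Rop. rewrite evol_Econv.
  assert (Hsig : 0 <= RInt DI (s - tau s) s) by (apply RI_ge0; auto; assert (0 < tau s) by auto; lra).
  assert (E : (fun y0 => p (s - tau s) * h (w (s - tau s) y0)) = psi w s).
  { apply functional_extensionality; intros z. unfold psi.
    destruct (Rle_dec 0 (s - tau s)).
    - rewrite Rmax_right by lra. auto.
    - rewrite Hpz by lra. ring. }
  rewrite E. rewrite (Rep _ _ _ _ (psi_cb w s Hw) Hsig).
  rewrite Rmax_right by auto. unfold sigp, ee. rewrite Rmax_right by auto. ring.
Qed.

Lemma evol_S t s phi x M : cb phi M -> s <= t ->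
  evol DI dI t s phi x = exp (- RInt dI s t) * S (Rmax 0 (RInt DI s t)) phi x.
Proof.
  intros Hcb Hst. rewrite evol_Econv.
  assert (Hsig : 0 <= RInt DI s t) by (apply RI_ge0; auto).
  rewrite (Rep _ _ _ _ Hcb Hsig). rewrite Rmax_right; auto.
Qed.

Definition Gt (w : R -> R -> R) t x s := exp (- RInt dI s t) * S (Rmax 0 (RInt DI s t)) (Fw w s) x.

Lemma Gt_cont w t x s : wok w -> continuous (Gt w t x) s.
Proof.
  intros Hw. apply cpt'. unfold Gt. apply continuity_pt_mult.
  - apply (continuity_pt_comp (fun s => - RInt dI s t) exp).
    apply continuity_pt_opp.
    apply continuity_pt_ext with (fun s => RInt dI 0 t - RInt dI 0 s). intros; symmetry; apply RI_split; auto.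
    apply continuity_pt_minus. apply continuity_pt_const; intros a b; auto. apply cont_RI; auto.
    apply derivable_continuous_pt, derivable_pt_exp.
  - apply (c2_to_s (fun s x => S (Rmax 0 (RInt DI s t)) (Fw w s) x)).
    apply (Scont (Fw w) (fun s => Rmax 0 (RInt DI s t)) BF).
    apply Fw_c2; auto. apply Fw_b; auto.
    intros s'. apply cont_Rmax0.
    apply continuity_pt_ext with (fun s => RInt DI 0 t - RInt DI 0 s). intros; symmetry; apply RI_split; auto.
    apply continuity_pt_minus. apply continuity_pt_const; intros a b; auto. apply cont_RI; auto.
    intros; apply Rmax_l.
Qed.


Definition Ub (ubar : R -> R) := fun (t : R) (_ : R) => ubar t.

Lemma Fw_Ub_const ubar s y : Fw (Ub ubar) s y = Fw (Ub ubar) s 0.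
Proof.
  unfold Fw. f_equal.
Qed.

Lemma Gt_Ub ubar t x s : Gt (Ub ubar) t x s = exp (- RInt dI s t) * Fw (Ub ubar) s 0.
Proof.
  unfold Gt. f_equal.
  replace (Fw (Ub ubar) s) with (fun _ : R => Fw (Ub ubar) s 0).
  apply S_const. apply functional_extensionality; intros y. symmetry; apply Fw_Ub_const.
Qed.

Lemma Gt_diff u ubar t x s : wok u -> wok (Ub ubar) ->
  Gt u t x s - Gt (Ub ubar) t x s = exp (- RInt dI s t) * S (Rmax 0 (RInt DI s t)) (fun y => Fw u s y - Fw (Ub ubar) s y) x.
Proof.
  intros Hu Hub. unfold Gt. rewrite (S_minus _ _ _ _ BF BF (Fw_cb u s Hu) (Fw_cb (Ub ubar) s Hub)). ring.
Qed.

Variables (u : R -> R -> R) (ubar : R -> R) (cs Dm tm : R).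
Hypothesis Hu : wok u.
Hypothesis Hub : wok (Ub ubar).
Hypothesis HDm : forall t, DI t <= Dm.
Hypothesis Htm : forall t, tau t <= tm.
Hypothesis Hh0 : h 0 = 0.
Hypothesis Hcs0 : 0 < cs.
Hypothesis Hhunif : forall eps, 0 < eps -> exists d, 0 < d /\ forall z1 z2, 0 <= z1 -> 0 <= z2 -> Rabs (z1 - z2) < d -> Rabs (h z1 - h z2) < eps.
Hypothesis Hu_out : forall c, cs < c -> forall eps, 0 < eps -> exists t0,
      forall t x, t0 <= t -> c * t <= Rabs x -> Rabs (u t x) <= eps.
Hypothesis Hu_in : forall c, 0 < c < cs -> forall eps, 0 < eps -> exists t0,
      forall t x, t0 <= t -> Rabs x <= c * t -> Rabs (u t x - ubar t) <= eps.

Lemma Dm0 : 0 <= Dm.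
Proof. eapply Rle_trans. apply (HDI0 0). apply HDm. Qed.

Lemma tm0 : 0 < tm.
Proof. eapply Rlt_le_trans. apply (Htau0 0). apply Htm. Qed.

Lemma sigp_le s : sigp s <= Dm * tm.
Proof.
  unfold sigp. apply Rmax_lub. apply Rmult_le_pos. apply Dm0. left; apply tm0.
  apply Rle_trans with (Dm * (s - (s - tau s))). apply RI_le_const; auto.
  assert (0 < tau s) by auto. lra.
  replace (s - (s - tau s)) with (tau s) by ring. apply Rmult_le_compat_l. apply Dm0. auto.
Qed.

Lemma sqrt_sigp_le s : sqrt (sigp s) <= sqrt (Dm * tm).
Proof. apply sqrt_le_1_alt, sigp_le. Qed.

Lemma abs_le_sub a b c : Rabs (a - b) <= c -> Rabs a <= Rabs b + c.
Proof. intros H. replace a with (b + (a - b)) by ring. eapply Rle_trans. apply Rabs_triang. lra. Qed.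

Lemma inner_local c1 eta : 0 < c1 < cs -> 0 < eta -> exists T1, forall s y, T1 <= s -> Rabs y <= c1 * s ->
  Rabs (Fw u s y - Fw (Ub ubar) s y) <= eta.
Proof.
  intros Hc1 Heta.
  set (c2 := (c1 + cs) / 2).
  assert (HP := Pm0). assert (HH := Hb0). assert (HC := Ct0).
  set (K := Pm + Ct * Pm + 1).
  assert (HK : 0 < K) by (unfold K; assert (0 <= Ct * Pm) by (apply Rmult_le_pos; lra); lra).
  set (eh := eta / (2 * K)).
  assert (Heh : 0 < eh) by (unfold eh; apply Rdiv_lt_0_compat; lra).
  set (L := Ct * (2 * (Pm * Hb)) + 1).
  assert (HL : 0 < L) by (unfold L; assert (0 <= Pm * Hb) by (apply Rmult_le_pos; lra); assert (0 <= Ct * (Pm * Hb)) by (apply Rmult_le_pos; lra); nra).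
  destruct (GR (eta / 2 / L) ltac:(apply Rdiv_lt_0_compat; lra)) as [R' [HR' HG]].
  destruct (Hhunif eh Heh) as [dh [Hdh Hdh2]].
  destruct (Hu_in c1 ltac:(lra) (dh/2) ltac:(lra)) as [t1 Ht1].
  destruct (Hu_in c2 ltac:(unfold c2; lra) (dh/2) ltac:(lra)) as [t2 Ht2].
  assert (Htm0 := tm0).
  set (A := sqrt (Dm * tm) * R').
  assert (HA : 0 <= A) by (unfold A; apply Rmult_le_pos; [apply sqrt_pos| lra]).
  assert (Hc21 : 0 < c2 - c1) by (unfold c2; lra).
  set (B := (A + c2 * tm) / (c2 - c1)).
  assert (HB : 0 <= B) by (unfold B; apply Rmult_le_pos; [ | left; apply Rinv_0_lt_compat; lra]; unfold c2; nra).
  exists (Rabs t1 + Rabs t2 + tm + B + 1). intros s y Hs Hy.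
  assert (t1 <= Rabs t1) by apply Rle_abs. assert (t2 <= Rabs t2) by apply Rle_abs.
  assert (0 <= Rabs t1) by apply Rabs_pos. assert (0 <= Rabs t2) by apply Rabs_pos.
  assert (Hs0 : 0 <= s) by lra.
  unfold Fw. rewrite Rmax_right by lra.
  assert (E : S (sigp s) (psi u s) y - S (sigp s) (psi (Ub ubar) s) y =
              S (sigp s) (fun z => psi u s z - psi (Ub ubar) s z) y).
  { symmetry. apply (S_minus _ _ _ _ (Pm * Hb) (Pm * Hb)); apply psi_cb; auto. }
  replace (p s * h (u s y) - (1 - Derive tau s) * ee s * S (sigp s) (psi u s) y -
     (p s * h (Ub ubar s y) - (1 - Derive tau s) * ee s * S (sigp s) (psi (Ub ubar) s) y))
    with (p s * (h (u s y) - h (ubar s)) - (1 - Derive tau s) * ee s * (S (sigp s) (psi u s) y - S (sigp s) (psi (Ub ubar) s) y))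
    by (unfold Ub; ring).
  rewrite E.
  assert (Hcbd : cb (fun z => psi u s z - psi (Ub ubar) s z) (2 * (Pm * Hb))).
  { destruct (psi_cb u s Hu) as [C1 B1]. destruct (psi_cb (Ub ubar) s Hub) as [C2 B2]. split.
    - intros z. apply (continuous_minus (K:=R_AbsRing) (V:=R_NormedModule)); auto.
    - intros z. replace (psi u s z - psi (Ub ubar) s z) with (psi u s z + - psi (Ub ubar) s z) by ring.
      eapply Rle_trans. apply Rabs_triang. rewrite Rabs_Ropp. specialize (B1 z). specialize (B2 z). lra. }
  assert (Hloc : forall w, - R' <= w <= R' -> Rabs (psi u s (y - sqrt (sigp s) * w) - psi (Ub ubar) s (y - sqrt (sigp s) * w)) <= Pm * eh).
  { intros w Hw. set (z := y - sqrt (sigp s) * w).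
    set (s' := s - tau s).
    assert (Hs' : s - tm <= s') by (unfold s'; assert (tau s <= tm) by auto; lra).
    assert (Hs'0 : 0 <= s') by lra.
    assert (Hz : Rabs z <= c2 * s').
    { unfold z. eapply Rle_trans. apply Rabs_triang. rewrite Rabs_Ropp, Rabs_mult, (Rabs_pos_eq (sqrt _)) by apply sqrt_pos.
      assert (Rabs w <= R') by (apply Rabs_le; lra).
      assert (sqrt (sigp s) * Rabs w <= A) by (unfold A; apply Rmult_le_compat; try apply sqrt_pos; try apply Rabs_pos; auto; apply sqrt_sigp_le).
      assert (c2 * (s - tm) <= c2 * s') by (apply Rmult_le_compat_l; unfold c2; lra).
      assert (B * (c2 - c1) = A + c2 * tm) by (unfold B; field; lra).
      assert (c1 * s + A <= c2 * (s - tm)) by nra.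
      lra. }
    unfold psi, Ub. fold s'. rewrite Rmax_right by lra.
    replace (p s' * h (u s' z) - p s' * h (ubar s')) with (p s' * (h (u s' z) - h (ubar s'))) by ring.
    rewrite Rabs_mult. apply Rmult_le_compat; try apply Rabs_pos. rewrite Rabs_pos_eq; apply Hp.
    left. apply Hdh2. apply (proj2 Hu); lra. apply (proj2 Hub s' 0); lra.
    assert (Rabs (u s' z - ubar s') <= dh / 2) by (apply Ht2; auto; lra). lra. }
  assert (HS := S_loc (sigp s) _ y (2 * (Pm * Hb)) R' (Pm * eh) Hcbd ltac:(lra) ltac:(nra) Hloc).
  assert (Hhy : Rabs (h (u s y) - h (ubar s)) < eh).
  { apply Hdh2. apply (proj2 Hu); lra. apply (proj2 Hub s 0); lra.
    assert (Rabs (u s y - ubar s) <= dh / 2) by (apply Ht1; auto; lra). lra. }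
  replace (p s * (h (u s y) - h (ubar s)) - (1 - Derive tau s) * ee s * S (sigp s) (fun z => psi u s z - psi (Ub ubar) s z) y)
    with (p s * (h (u s y) - h (ubar s)) + - ((1 - Derive tau s) * (ee s * S (sigp s) (fun z => psi u s z - psi (Ub ubar) s z) y))) by ring.
  eapply Rle_trans. apply Rabs_triang. rewrite Rabs_Ropp, !Rabs_mult.
  rewrite (Rabs_pos_eq (p s)) by apply Hp. rewrite (Rabs_pos_eq (ee s)) by apply ee_le1.
  assert (T1 : p s * Rabs (h (u s y) - h (ubar s)) <= Pm * eh).
  { apply Rmult_le_compat; try apply Hp; try apply Rabs_pos; lra. }
  assert (T2 : Rabs (1 - Derive tau s) * (ee s * Rabs (S (sigp s) (fun z => psi u s z - psi (Ub ubar) s z) y))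
             <= Ct * (Pm * eh + 2 * (Pm * Hb) * (1 - RInt g1 (- R') R'))).
  { apply Rmult_le_compat; try apply Rabs_pos. apply Rmult_le_pos. apply ee_le1. apply Rabs_pos.
    apply HCt. rewrite <- (Rmult_1_l (_ + _)). apply Rmult_le_compat. apply ee_le1. apply Rabs_pos. apply ee_le1. exact HS. }
  assert (G1 := G_le1 R').
  assert (Pm * eh + Ct * (Pm * eh) <= eta / 2).
  { apply Rle_trans with (K * eh). replace (Pm * eh + Ct * (Pm * eh)) with ((Pm + Ct * Pm) * eh) by ring.
    apply Rmult_le_compat_r; unfold K; lra. unfold eh. right. field. lra. }
  assert (Ct * (2 * (Pm * Hb) * (1 - RInt g1 (- R') R')) <= eta / 2).
  { assert (HX: 0 <= 1 - RInt g1 (-R') R') by lra.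
    assert (HP0 : 0 <= Ct * (2 * (Pm * Hb))) by (repeat apply Rmult_le_pos; lra).
    apply Rle_trans with (Ct * (2 * (Pm * Hb)) * (eta / 2 / L)). rewrite <- Rmult_assoc. apply Rmult_le_compat_l; lra.
    apply Rle_trans with (L * (eta/2/L)). apply Rmult_le_compat_r. left; apply Rdiv_lt_0_compat; lra. unfold L; lra.
    right; field; lra. }
  nra.
Qed.

Lemma outer_local c1 eta : cs < c1 -> 0 < eta -> exists T1, forall s y, T1 <= s -> c1 * s <= Rabs y ->
  Rabs (Fw u s y) <= eta.
Proof.
  intros Hc1 Heta.
  set (c2 := (cs + c1) / 2).
  assert (HP := Pm0). assert (HH := Hb0). assert (HC := Ct0).
  set (K := Pm + Ct * Pm + 1).
  assert (HK : 0 < K) by (unfold K; assert (0 <= Ct * Pm) by (apply Rmult_le_pos; lra); lra).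
  set (eh := eta / (2 * K)).
  assert (Heh : 0 < eh) by (unfold eh; apply Rdiv_lt_0_compat; lra).
  set (L := Ct * (Pm * Hb) + 1).
  assert (HL : 0 < L) by (unfold L; assert (0 <= Pm * Hb) by (apply Rmult_le_pos; lra); assert (0 <= Ct * (Pm * Hb)) by (apply Rmult_le_pos; lra); nra).
  destruct (GR (eta / 2 / L) ltac:(apply Rdiv_lt_0_compat; lra)) as [R' [HR' HG]].
  destruct (Hhunif eh Heh) as [dh [Hdh Hdh2]].
  destruct (Hu_out c1 ltac:(lra) (dh/2) ltac:(lra)) as [t1 Ht1].
  destruct (Hu_out c2 ltac:(unfold c2; lra) (dh/2) ltac:(lra)) as [t2 Ht2].
  assert (Hsmall : forall z, 0 <= z -> z <= dh / 2 -> Rabs (h z) <= eh).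
  { intros z Hz1 Hz2. replace (h z) with (h z - h 0) by (rewrite Hh0; ring). left. apply Hdh2; try lra.
    rewrite Rminus_0_r, Rabs_pos_eq; lra. }
  assert (Htm0 := tm0).
  set (A := sqrt (Dm * tm) * R').
  assert (HA : 0 <= A) by (unfold A; apply Rmult_le_pos; [apply sqrt_pos| lra]).
  assert (Hc12 : 0 < c1 - c2) by (unfold c2; lra).
  set (B := A / (c1 - c2)).
  assert (HB : 0 <= B) by (unfold B; apply Rmult_le_pos; [ lra | left; apply Rinv_0_lt_compat; lra]).
  exists (Rabs t1 + Rabs t2 + tm + B + 1). intros s y Hs Hy.
  assert (t1 <= Rabs t1) by apply Rle_abs. assert (t2 <= Rabs t2) by apply Rle_abs.
  assert (0 <= Rabs t1) by apply Rabs_pos. assert (0 <= Rabs t2) by apply Rabs_pos.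
  assert (Hs0 : 0 <= s) by lra.
  unfold Fw. rewrite Rmax_right by lra.
  assert (Hloc : forall w, - R' <= w <= R' -> Rabs (psi u s (y - sqrt (sigp s) * w)) <= Pm * eh).
  { intros w Hw. set (z := y - sqrt (sigp s) * w).
    set (s' := s - tau s).
    assert (Hs' : s - tm <= s') by (unfold s'; assert (tau s <= tm) by auto; lra).
    assert (Hs'2 : s' <= s) by (unfold s'; assert (0 < tau s) by auto; lra).
    assert (Hs'0 : 0 <= s') by lra.
    assert (Hz : c2 * s' <= Rabs z).
    { unfold z. 
      assert (Rabs w <= R') by (apply Rabs_le; lra).
      assert (Rabs (sqrt (sigp s) * w) <= A).
      { rewrite Rabs_mult, (Rabs_pos_eq (sqrt _)) by apply sqrt_pos.
        unfold A; apply Rmult_le_compat; try apply sqrt_pos; try apply Rabs_pos; auto; apply sqrt_sigp_le. }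
      assert (Rabs y <= Rabs (y - sqrt (sigp s) * w) + Rabs (sqrt (sigp s) * w)).
      { replace y with ((y - sqrt (sigp s) * w) + sqrt (sigp s) * w) at 1 by ring. apply Rabs_triang. }
      assert (c2 * s' <= c2 * s) by (apply Rmult_le_compat_l; unfold c2; lra).
      assert (B * (c1 - c2) = A) by (unfold B; field; lra).
      assert (c2 * s + A <= c1 * s) by nra.
      lra. }
    unfold psi. fold s'. rewrite Rmax_right by lra.
    rewrite Rabs_mult. apply Rmult_le_compat; try apply Rabs_pos. rewrite Rabs_pos_eq; apply Hp.
    apply Hsmall. apply (proj2 Hu); lra.
    assert (Rabs (u s' z) <= dh / 2) by (apply Ht2; auto; lra). apply abs_le_split in H3. lra. }
  assert (HS := S_loc (sigp s) _ y (Pm * Hb) R' (Pm * eh) (psi_cb u s Hu) ltac:(lra) ltac:(nra) Hloc).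
  assert (Hhy : Rabs (h (u s y)) <= eh).
  { apply Hsmall. apply (proj2 Hu); lra.
    assert (Rabs (u s y) <= dh / 2) by (apply Ht1; auto; lra). apply abs_le_split in H3. lra. }
  replace (p s * h (u s y) - (1 - Derive tau s) * ee s * S (sigp s) (psi u s) y)
    with (p s * h (u s y) + - ((1 - Derive tau s) * (ee s * S (sigp s) (psi u s) y))) by ring.
  eapply Rle_trans. apply Rabs_triang. rewrite Rabs_Ropp, !Rabs_mult.
  rewrite (Rabs_pos_eq (p s)) by apply Hp. rewrite (Rabs_pos_eq (ee s)) by apply ee_le1.
  assert (T1 : p s * Rabs (h (u s y)) <= Pm * eh).
  { apply Rmult_le_compat; try apply Hp; try apply Rabs_pos; lra. }
  assert (T2 : Rabs (1 - Derive tau s) * (ee s * Rabs (S (sigp s) (psi u s) y))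
             <= Ct * (Pm * eh + (Pm * Hb) * (1 - RInt g1 (- R') R'))).
  { apply Rmult_le_compat; try apply Rabs_pos. apply Rmult_le_pos. apply ee_le1. apply Rabs_pos.
    apply HCt. rewrite <- (Rmult_1_l (_ + _)). apply Rmult_le_compat. apply ee_le1. apply Rabs_pos. apply ee_le1. exact HS. }
  assert (G1 := G_le1 R').
  assert (Pm * eh + Ct * (Pm * eh) <= eta / 2).
  { apply Rle_trans with (K * eh). replace (Pm * eh + Ct * (Pm * eh)) with ((Pm + Ct * Pm) * eh) by ring.
    apply Rmult_le_compat_r; unfold K; lra. unfold eh. right. field. lra. }
  assert (Ct * ((Pm * Hb) * (1 - RInt g1 (- R') R')) <= eta / 2).
  { assert (HX: 0 <= 1 - RInt g1 (-R') R') by lra.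
    assert (HP0 : 0 <= Ct * (Pm * Hb)) by (repeat apply Rmult_le_pos; lra).
    apply Rle_trans with (Ct * (Pm * Hb) * (eta / 2 / L)). rewrite <- Rmult_assoc. apply Rmult_le_compat_l; lra.
    apply Rle_trans with (L * (eta/2/L)). apply Rmult_le_compat_r. left; apply Rdiv_lt_0_compat; lra. unfold L; lra.
    right; field; lra. }
  nra.
Qed.


Lemma TI (g : R -> R) t K0 B eta d : 0 < d -> 0 <= K0 <= t -> 0 <= B -> (forall s, continuous g s) ->
  (forall s, 0 <= s <= t -> Rabs (g s) <= B * exp (- d * (t - s))) ->
  (forall s, t - K0 <= s <= t -> Rabs (g s) <= eta) ->
  Rabs (RInt g 0 t) <= B * exp (- d * K0) / d + eta * K0.
Proof.
  intros Hd HK HB Hg H1 H2.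
  assert (Hex : forall a b, ex_RInt g a b) by (intros; apply exR_all; auto).
  rewrite <- (RCh g 0 (t - K0) t) by auto.
  eapply Rle_trans. apply Rabs_triang. apply Rplus_le_compat.
  - set (F := fun s => B * exp (- d * (t - s)) / d).
    assert (HI : is_RInt (fun s => B * exp (- d * (t - s))) 0 (t - K0) (minus (F (t - K0)) (F 0))).
    { apply (is_RInt_derive (V:=R_CompleteNormedModule)).
      - intros x _. unfold F. auto_derive; auto. replace (t + - x) with (t - x) by ring. field. lra.
      - intros x _. apply edc. auto_derive. auto. }
    eapply Rle_trans. apply abs_RI_le2. lra. auto. eexists; exact HI.
    intros; apply H1; lra.
    rewrite (RIu _ _ _ _ HI). unfold F, minus, plus, opp; simpl.
    replace (- d * (t - (t - K0))) with (- d * K0) by ring.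
    assert (0 <= B * exp (- d * (t - 0)) / d).
    { apply Rmult_le_pos. apply Rmult_le_pos; auto. left; apply exp_pos. left; apply Rinv_0_lt_compat; lra. }
    lra.
  - eapply Rle_trans. apply abs_RInt_le_const. lra. auto. intros; apply H2; lra.
    right. ring.
Qed.

Lemma exp_choose d a eps : 0 < d -> 0 <= a -> 0 < eps -> exists K, 0 <= K /\ forall x, K <= x -> a * exp (- d * x) <= eps.
Proof.
  intros Hd Ha He. exists (a / (d * eps)). split.
  apply Rmult_le_pos; auto. left; apply Rinv_0_lt_compat; nra.
  intros x Hx.
  assert (Hx0 : 0 <= x) by (eapply Rle_trans; [| exact Hx]; apply Rmult_le_pos; auto; left; apply Rinv_0_lt_compat; nra).
  assert (H1 := exp_ineq1_le (d * x)).
  rewrite <- Ropp_mult_distr_l, exp_Ropp.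
  apply Rle_trans with (a * / (1 + d * x)).
  apply Rmult_le_compat_l; auto. apply Rinv_le_contravar; nra.
  assert (a <= d * eps * x).
  { apply Rle_trans with (d * eps * (a / (d * eps))). right; field; lra. apply Rmult_le_compat_l; nra. }
  apply Rle_trans with (a * / (a / eps + 1)).
  { apply Rmult_le_compat_l; auto. apply Rinv_le_contravar.
    apply Rplus_le_lt_0_compat. apply Rmult_le_pos; auto. left; apply Rinv_0_lt_compat; lra. lra.
    assert (a / eps <= d * x). { apply Rmult_le_reg_r with eps; auto. unfold Rdiv. rewrite Rmult_assoc, Rinv_l by lra. lra. }
    lra. }
  apply Rle_trans with (a * / (a / eps)).
  destruct (Req_dec a 0). subst. rewrite !Rmult_0_l. lra.
  apply Rmult_le_compat_l; auto. apply Rinv_le_contravar.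
  apply Rmult_lt_0_compat. lra. apply Rinv_0_lt_compat; lra. lra.
  destruct (Req_dec a 0). subst. rewrite !Rmult_0_l. lra.
  right. field. lra.
Qed.

Variables (v0 : R -> R) (v : R -> R -> R) (M0 dl : R).
Hypothesis Hv0c : forall x, continuous v0 x.
Hypothesis Hv0b : forall x, Rabs (v0 x) <= M0.
Hypothesis Hdl : 0 < dl.
Hypothesis Hdl2 : forall t, dl <= dI t.
Hypothesis Hvm : forall t x, 0 < t -> v t x = evol DI dI t 0 v0 x +
  RInt (fun s => evol DI dI t s ((fun s y => p s * h (u s y) - Rop DI dI tau p h s (u (s - tau s)) y) s) x) 0 t.

Lemma v_rep t x : 0 < t -> v t x = exp (- RInt dI 0 t) * S (Rmax 0 (RInt DI 0 t)) v0 x + RInt (Gt u t x) 0 t.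
Proof.
  intros Ht. rewrite Hvm by auto. f_equal.
  - apply (evol_S t 0 v0 x M0). split; auto. lra.
  - apply RInt_ext. intros s Hs. rewrite Rmin_left, Rmax_right in Hs by lra.
    replace (fun y => p s * h (u s y) - Rop DI dI tau p h s (u (s - tau s)) y) with (Fw u s).
    apply (evol_S t s _ x BF). apply Fw_cb; auto. lra.
    apply functional_extensionality; intros y. symmetry; apply Fw_eq; auto. lra.
Qed.

Lemma vbar_rep t x : 0 <= t -> vbar DI dI tau p h ubar t = RInt (Gt (Ub ubar) t x) 0 t.
Proof.
  intros Ht. unfold vbar. apply RInt_ext. intros s Hs. rewrite Rmin_left, Rmax_right in Hs by lra.
  rewrite Gt_Ub. f_equal. apply (Fw_eq (Ub ubar) s 0); auto. lra.
Qed.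

Lemma exp_decay s t : s <= t -> exp (- RInt dI s t) <= exp (- dl * (t - s)).
Proof.
  intros H. apply exp_le. assert (dl * (t - s) <= RInt dI s t) by (apply RI_ge_const; auto). lra.
Qed.

Lemma sig_le s t : s <= t -> Rmax 0 (RInt DI s t) <= Dm * (t - s).
Proof.
  intros H. apply Rmax_lub. apply Rmult_le_pos. apply Dm0. lra. apply RI_le_const; auto.
Qed.

Lemma E0_bound t x : 0 <= t -> Rabs (exp (- RInt dI 0 t) * S (Rmax 0 (RInt DI 0 t)) v0 x) <= M0 * exp (- dl * t).
Proof.
  intros Ht. rewrite Rabs_mult, Rabs_pos_eq by (left; apply exp_pos). rewrite Rmult_comm.
  apply Rmult_le_compat. apply Rabs_pos. left; apply exp_pos.
  apply (S_bound _ _ _ _ (conj Hv0c Hv0b)).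
  replace (- dl * t) with (- dl * (t - 0)) by ring. apply exp_decay; auto.
Qed.

Lemma M00 : 0 <= M0.
Proof. eapply Rle_trans. apply Rabs_pos. apply (Hv0b 0). Qed.

Lemma BF0 : 0 <= BF.
Proof. eapply Rle_trans. apply Rabs_pos. apply (Fw_b u Hu 0 0). Qed.

Lemma outer_final c : cs < c -> forall eps, 0 < eps -> exists t0,
  forall t x, t0 <= t -> c * t <= Rabs x -> Rabs (v t x) <= eps.
Proof.
  intros Hc eps Heps.
  set (c1 := (cs + c) / 2).
  assert (HBF := BF0). assert (HM0 := M00).
  destruct (exp_choose dl (BF / dl) (eps / 4) Hdl ltac:(apply Rmult_le_pos; auto; left; apply Rinv_0_lt_compat; lra) ltac:(lra)) as [K0 [HK0 HK0']].
  set (eta := eps / (4 * (K0 + 1))).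
  assert (Heta : 0 < eta) by (unfold eta; apply Rdiv_lt_0_compat; lra).
  destruct (outer_local c1 eta ltac:(unfold c1; lra) Heta) as [T1 HT1].
  destruct (GR (eta / (BF + 1)) ltac:(apply Rdiv_lt_0_compat; lra)) as [R [HR HG]].
  destruct (exp_choose dl M0 (eps / 4) Hdl HM0 ltac:(lra)) as [KE [HKE HKE']].
  set (A := sqrt (Dm * K0) * R).
  assert (HA : 0 <= A) by (unfold A; apply Rmult_le_pos; [apply sqrt_pos| lra]).
  assert (Hcc : 0 < c - c1) by (unfold c1; lra).
  exists (Rabs T1 + K0 + A / (c - c1) + KE + 1). intros t x Ht Hx.
  assert (T1 <= Rabs T1) by apply Rle_abs. assert (0 <= Rabs T1) by apply Rabs_pos.
  assert (HAc : 0 <= A / (c - c1)) by (apply Rmult_le_pos; auto; left; apply Rinv_0_lt_compat; lra).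
  assert (Ht0 : 0 < t) by lra.
  rewrite v_rep by auto.
  eapply Rle_trans. apply Rabs_triang.
  assert (HE : Rabs (exp (- RInt dI 0 t) * S (Rmax 0 (RInt DI 0 t)) v0 x) <= eps / 4).
  { eapply Rle_trans. apply E0_bound; lra. apply HKE'. lra. }
  assert (G1 := G_le1 R).
  assert (HBG : BF * (1 - RInt g1 (- R) R) <= eta).
  { apply Rle_trans with (BF * (eta / (BF + 1))). apply Rmult_le_compat_l; lra.
    apply Rle_trans with ((BF + 1) * (eta / (BF + 1))). apply Rmult_le_compat_r. left; apply Rdiv_lt_0_compat; lra. lra.
    right; field; lra. }
  assert (HI : Rabs (RInt (Gt u t x) 0 t) <= BF * exp (- dl * K0) / dl + (eta + eta) * K0).
  { apply TI; auto. lra. intros; apply Gt_cont; auto.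
    - intros s Hs. unfold Gt. rewrite Rabs_mult, Rabs_pos_eq by (left; apply exp_pos). rewrite Rmult_comm.
      apply Rmult_le_compat. apply Rabs_pos. left; apply exp_pos. apply (S_bound _ _ _ _ (Fw_cb u s Hu)).
      apply exp_decay; lra.
    - intros s Hs. unfold Gt. rewrite Rabs_mult, Rabs_pos_eq by (left; apply exp_pos).
      apply Rle_trans with (1 * (eta + eta)).
      apply Rmult_le_compat. left; apply exp_pos. apply Rabs_pos.
      apply Rle_trans with (exp 0); [| rewrite exp_0; lra]. apply exp_le.
      assert (0 <= RInt dI s t) by (apply RI_ge0; auto; lra). lra.
      eapply Rle_trans. apply (S_loc _ _ _ BF R eta (Fw_cb u s Hu)); try lra.
      + intros w Hw. apply HT1. lra.
        set (sg := Rmax 0 (RInt DI s t)).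
        assert (Hsg : sqrt sg <= sqrt (Dm * K0)).
        { apply sqrt_le_1_alt. eapply Rle_trans. apply sig_le. lra. apply Rmult_le_compat_l. apply Dm0. lra. }
        assert (Rabs (sqrt sg * w) <= A).
        { rewrite Rabs_mult, (Rabs_pos_eq (sqrt _)) by apply sqrt_pos. unfold A.
          apply Rmult_le_compat; try apply sqrt_pos; try apply Rabs_pos; auto. apply Rabs_le; lra. }
        assert (Rabs x <= Rabs (x - sqrt sg * w) + Rabs (sqrt sg * w)).
        { replace x with ((x - sqrt sg * w) + sqrt sg * w) at 1 by ring. apply Rabs_triang. }
        assert (HA2 : A / (c - c1) * (c - c1) = A) by (field; lra).
        assert (c1 * s <= c1 * t) by (apply Rmult_le_compat_l; unfold c1; lra).
        assert (A <= (c - c1) * t).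
        { rewrite <- HA2. rewrite Rmult_comm. apply Rmult_le_compat_l; lra. }
        lra.
      + lra.
      + lra. }
  assert (HK1 : BF * exp (- dl * K0) / dl <= eps / 4).
  { replace (BF * exp (- dl * K0) / dl) with (BF / dl * exp (- dl * K0)) by (field; lra). apply HK0'. lra. }
  assert (HK2 : (eta + eta) * K0 <= eps / 2).
  { unfold eta. apply Rle_trans with (eps / 2 * (K0 / (K0 + 1))). right. field. lra.
    rewrite <- (Rmult_1_r (eps / 2)) at 2. apply Rmult_le_compat_l. lra.
    apply Rmult_le_reg_r with (K0 + 1). lra. unfold Rdiv. rewrite Rmult_assoc, Rinv_l by lra. lra. }
  lra.
Qed.


Lemma D_cb s : cb (fun y => Fw u s y - Fw (Ub ubar) s y) (2 * BF).
Proof.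
  destruct (Fw_cb u s Hu) as [C1 B1]. destruct (Fw_cb (Ub ubar) s Hub) as [C2 B2]. split.
  - intros z. apply (continuous_minus (K:=R_AbsRing) (V:=R_NormedModule)); auto.
  - intros z. replace (Fw u s z - Fw (Ub ubar) s z) with (Fw u s z + - Fw (Ub ubar) s z) by ring.
    eapply Rle_trans. apply Rabs_triang. rewrite Rabs_Ropp. specialize (B1 z). specialize (B2 z). lra.
Qed.

Lemma inner_final c : 0 < c < cs -> forall eps, 0 < eps -> exists t0,
  forall t x, t0 <= t -> Rabs x <= c * t -> Rabs (v t x - vbar DI dI tau p h ubar t) <= eps.
Proof.
  intros Hc eps Heps.
  set (c1 := (c + cs) / 2).
  assert (HBF := BF0). assert (HM0 := M00).
  set (B2 := 2 * BF). assert (HB2 : 0 <= B2) by (unfold B2; lra).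
  destruct (exp_choose dl (B2 / dl) (eps / 4) Hdl ltac:(apply Rmult_le_pos; auto; left; apply Rinv_0_lt_compat; lra) ltac:(lra)) as [K0 [HK0 HK0']].
  set (eta := eps / (4 * (K0 + 1))).
  assert (Heta : 0 < eta) by (unfold eta; apply Rdiv_lt_0_compat; lra).
  destruct (inner_local c1 eta ltac:(unfold c1; lra) Heta) as [T1 HT1].
  destruct (GR (eta / (B2 + 1)) ltac:(apply Rdiv_lt_0_compat; lra)) as [R [HR HG]].
  destruct (exp_choose dl M0 (eps / 4) Hdl HM0 ltac:(lra)) as [KE [HKE HKE']].
  set (A := sqrt (Dm * K0) * R).
  assert (HA : 0 <= A) by (unfold A; apply Rmult_le_pos; [apply sqrt_pos| lra]).
  assert (Hcc : 0 < c1 - c) by (unfold c1; lra).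
  assert (Hc10 : 0 < c1) by (unfold c1; lra).
  set (Q := (A + c1 * K0) / (c1 - c)).
  assert (HQ : 0 <= Q) by (unfold Q; apply Rmult_le_pos; [nra| left; apply Rinv_0_lt_compat; lra]).
  exists (Rabs T1 + K0 + Q + KE + 1). intros t x Ht Hx.
  assert (T1 <= Rabs T1) by apply Rle_abs. assert (0 <= Rabs T1) by apply Rabs_pos.
  assert (Ht0 : 0 < t) by lra.
  rewrite v_rep by auto. rewrite (vbar_rep t x) by lra.
  assert (Hex1 : ex_RInt (Gt u t x) 0 t) by (apply exR_all; intros; apply Gt_cont; auto).
  assert (Hex2 : ex_RInt (Gt (Ub ubar) t x) 0 t) by (apply exR_all; intros; apply Gt_cont; auto).
  replace (exp (- RInt dI 0 t) * S (Rmax 0 (RInt DI 0 t)) v0 x + RInt (Gt u t x) 0 t - RInt (Gt (Ub ubar) t x) 0 t)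
    with (exp (- RInt dI 0 t) * S (Rmax 0 (RInt DI 0 t)) v0 x + RInt (fun s => Gt u t x s - Gt (Ub ubar) t x s) 0 t)
    by (rewrite RImin by auto; rring).
  eapply Rle_trans. apply Rabs_triang.
  assert (HE : Rabs (exp (- RInt dI 0 t) * S (Rmax 0 (RInt DI 0 t)) v0 x) <= eps / 4).
  { eapply Rle_trans. apply E0_bound; lra. apply HKE'. lra. }
  assert (G1 := G_le1 R).
  assert (HBG : B2 * (1 - RInt g1 (- R) R) <= eta).
  { apply Rle_trans with (B2 * (eta / (B2 + 1))). apply Rmult_le_compat_l; lra.
    apply Rle_trans with ((B2 + 1) * (eta / (B2 + 1))). apply Rmult_le_compat_r. left; apply Rdiv_lt_0_compat; lra. lra.
    right; field; lra. }
  assert (HI : Rabs (RInt (fun s => Gt u t x s - Gt (Ub ubar) t x s) 0 t) <= B2 * exp (- dl * K0) / dl + (eta + eta) * K0).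
  { apply TI; auto. lra.
    - intros; apply (continuous_minus (K:=R_AbsRing) (V:=R_NormedModule)); apply Gt_cont; auto.
    - intros s Hs. rewrite Gt_diff by auto. rewrite Rabs_mult, Rabs_pos_eq by (left; apply exp_pos). rewrite Rmult_comm.
      apply Rmult_le_compat. apply Rabs_pos. left; apply exp_pos. apply (S_bound _ _ _ _ (D_cb s)).
      apply exp_decay; lra.
    - intros s Hs. rewrite Gt_diff by auto. rewrite Rabs_mult, Rabs_pos_eq by (left; apply exp_pos).
      apply Rle_trans with (1 * (eta + eta)).
      apply Rmult_le_compat. left; apply exp_pos. apply Rabs_pos.
      apply Rle_trans with (exp 0); [| rewrite exp_0; lra]. apply exp_le.
      assert (0 <= RInt dI s t) by (apply RI_ge0; auto; lra). lra.
      eapply Rle_trans. apply (S_loc _ _ _ B2 R eta (D_cb s)); try lra.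
      + intros w Hw. apply HT1. lra.
        set (sg := Rmax 0 (RInt DI s t)).
        assert (Hsg : sqrt sg <= sqrt (Dm * K0)).
        { apply sqrt_le_1_alt. eapply Rle_trans. apply sig_le. lra. apply Rmult_le_compat_l. apply Dm0. lra. }
        assert (Rabs (sqrt sg * w) <= A).
        { rewrite Rabs_mult, (Rabs_pos_eq (sqrt _)) by apply sqrt_pos. unfold A.
          apply Rmult_le_compat; try apply sqrt_pos; try apply Rabs_pos; auto. apply Rabs_le; lra. }
        assert (Rabs (x - sqrt sg * w) <= Rabs x + Rabs (sqrt sg * w)).
        { replace (x - sqrt sg * w) with (x + - (sqrt sg * w)) by ring. eapply Rle_trans. apply Rabs_triang. rewrite Rabs_Ropp. lra. }
        assert (HQ2 : Q * (c1 - c) = A + c1 * K0) by (unfold Q; field; lra).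
        assert (c1 * (t - K0) <= c1 * s) by (apply Rmult_le_compat_l; lra).
        assert (A + c1 * K0 <= (c1 - c) * t).
        { rewrite <- HQ2. rewrite Rmult_comm. apply Rmult_le_compat_l; lra. }
        nra.
      + lra.
      + lra. }
  assert (HK1 : B2 * exp (- dl * K0) / dl <= eps / 4).
  { replace (B2 * exp (- dl * K0) / dl) with (B2 / dl * exp (- dl * K0)) by (field; lra). apply HK0'. lra. }
  assert (HK2 : (eta + eta) * K0 <= eps / 2).
  { unfold eta. apply Rle_trans with (eps / 2 * (K0 / (K0 + 1))). right. field. lra.
    rewrite <- (Rmult_1_r (eps / 2)) at 2. apply Rmult_le_compat_l. lra.
    apply Rmult_le_reg_r with (K0 + 1). lra. unfold Rdiv. rewrite Rmult_assoc, Rinv_l by lra. lra. }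
  lra.
Qed.

End Model.

Lemma C1_cont f : isC1 f -> forall t, continuous f t.
Proof. intros H t. apply edc, (proj1 (H t)). Qed.

Lemma incr_g (tau : R -> R) : isC1 tau -> (forall t, Derive tau t < 1) ->
  forall a b, a <= b -> a - tau a <= b - tau b.
Proof.
  intros H H1 a b Hab.
  destruct (MVT_gen (fun x => x - tau x) a b (fun x => 1 - Derive tau x)) as [c [_ Hc]].
  - intros x _. apply (is_derive_minus (K:=R_AbsRing) (V:=R_NormedModule) (fun x => x) tau).
    apply (is_derive_id (K:=R_AbsRing)). apply Derive_correct, (proj1 (H x)).
  - intros x _. apply cpt. apply (continuous_minus (K:=R_AbsRing) (V:=R_NormedModule) (fun x => x) tau).
    apply continuous_id. apply C1_cont; auto.
  - assert (0 < 1 - Derive tau c) by (specialize (H1 c); lra).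
    assert (0 <= (1 - Derive tau c) * (b - a)) by (apply Rmult_le_pos; lra). lra.
Qed.

Theorem theorem5p4
  (T : R) (DM DI dM dI tau p h : R -> R)
  (alpha beta ta tb zstar ustar cstar : R) (ubar : R -> R)
  (u : R -> R -> R) (v0 : R -> R) (v : R -> R -> R)
  (* coefficients *)
  (HT : 0 < T)
  (HC1 : isC1 DM /\ isC1 DI /\ isC1 dM /\ isC1 dI /\ isC1 tau /\ isC1 p)
  (Hper : periodic T DM /\ periodic T DI /\ periodic T dM /\ periodic T dI /\
          periodic T tau /\ periodic T p)
  (HD : forall t, 0 <= DM t /\ 0 <= DI t)
  (Hd : forall t, 0 < dM t /\ 0 < dI t)
  (Htau : forall t, 0 < tau t)
  (Hp : forall t, 0 <= p t)
  (Htau' : forall t, Derive tau t < 1)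
  (* the times alpha, beta, t_alpha, t_beta *)
  (Hab : 0 < alpha /\ alpha <= beta /\ beta < ta /\ ta <= tb /\ tb < T)
  (Hta : ta - tau ta = alpha) (Htb : tb - tau tb = beta)
  (Hp0 : forall t, (0 <= t <= alpha \/ beta <= t <= T) -> p t = 0)
  (* birth function h (C^1, only its values on [0,oo) matter) *)
  (Hh1 : isC1 h)
  (Hh0 : h 0 = 0)
  (Hhpos : forall z, 0 <= z -> 0 <= h z)
  (Hhinf : is_lim h p_infty 0)
  (Hzstar : 0 < zstar)
  (Hhinc : forall z1 z2, 0 <= z1 -> z1 < z2 -> z2 < zstar -> h z1 < h z2)
  (Hhdec : forall z1 z2, zstar <= z1 -> z1 < z2 -> h z2 < h z1)
  (Hhsub : forall lam z, 0 < lam < 1 -> 0 <= z -> lam * h z <= h (lam * z))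
  (HL : 1 < Lconst T DI dI DM dM tau p h ta tb)
  (* u*, \bar u, c* *)
  (Hustar : min_pos_fix T DM dM DI dI tau p h ustar)
  (Hhmono : forall z1 z2, 0 <= z1 -> z1 <= z2 -> z2 <= ustar -> h z1 <= h z2)
  (Hubar : SolU DM dM DI dI tau p h (fun _ => ustar) (fun t _ => ubar t))
  (Hcstar : 0 < cstar)
  (Hspeed : spreading_speed T DM dM DI dI tau p h ustar cstar)
  (* u is a solution spreading with speed c*/T *)
  (Hu : SolU DM dM DI dI tau p h (u 0) u)
  (Hu_out : forall c, cstar / T < c -> forall eps, 0 < eps -> exists t0,
      forall t x, t0 <= t -> c * t <= Rabs x -> Rabs (u t x) <= eps)
  (Hu_in : forall c, 0 < c < cstar / T -> forall eps, 0 < eps -> exists t0,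
      forall t x, t0 <= t -> Rabs x <= c * t -> Rabs (u t x - ubar t) <= eps)
  (* v solves the v-equation with bounded initial value *)
  (Hv0 : exists M, forall x, Rabs (v0 x) <= M)
  (Hv : SolV DI dI tau p h u v0 v) :
  (forall c, cstar / T < c -> forall eps, 0 < eps -> exists t0,
      forall t x, t0 <= t -> c * t <= Rabs x -> Rabs (v t x) <= eps) /\
  (forall c, 0 < c < cstar / T -> forall eps, 0 < eps -> exists t0,
      forall t x, t0 <= t -> Rabs x <= c * t ->
        Rabs (v t x - vbar DI dI tau p h ubar t) <= eps).
Proof.
  destruct HC1 as [_ [C_DI [_ [C_dI [C_tau C_p]]]]].
  destruct Hper as [_ [P_DI [_ [P_dI [P_tau P_p]]]]].
  destruct Hab as [Ha1 [Ha2 [Ha3 [Ha4 Ha5]]]].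
  assert (HDIc := C1_cont DI C_DI). assert (HdIc := C1_cont dI C_dI).
  assert (Htauc := C1_cont tau C_tau). assert (Hpc := C1_cont p C_p).
  assert (Hhc := C1_cont h Hh1).
  assert (Hdtc : forall t, continuous (Derive tau) t) by (intros t; apply (proj2 (C_tau t))).
  assert (HDI0 : forall t, 0 <= DI t) by (intros; apply HD).
  assert (HdI0 : forall t, 0 <= dI t) by (intros; left; apply Hd).
  assert (Hpz : forall s, 0 <= s -> s - tau s < 0 -> p (s - tau s) = 0).
  { intros s Hs Hneg.
    assert (G := incr_g tau C_tau Htau' (tb - T) s ltac:(lra)).
    assert (E : tau (tb - T) = tau tb) by (rewrite <- (P_tau (tb - T)); f_equal; ring).
    rewrite E in G.
    rewrite <- P_p. apply Hp0. right. lra. }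
  destruct (per_max p T P_p HT Hpc) as [Pm HPm].
  destruct (h_bound h Hhc Hhinf) as [Hb [HHb0 HHb]].
  assert (P_dt := per_derive tau T P_tau (fun t => proj1 (C_tau t))).
  destruct (per_max (fun t => Rabs (1 - Derive tau t)) T) as [Ct HCt].
  { intros t; simpl. rewrite P_dt. auto. }
  auto.
  { intros t. apply cpt'. apply (continuity_pt_comp (fun t => 1 - Derive tau t) Rabs).
    apply continuity_pt_minus. apply continuity_pt_const; intros a b; auto. apply cpt, Hdtc. apply Rcontinuity_abs. }
  destruct (per_max DI T P_DI HT HDIc) as [Dm HDm].
  destruct (per_max tau T P_tau HT Htauc) as [tm Htm].
  destruct (per_min dI T P_dI HT HdIc) as [t0 Hdl2].
  assert (Hdl : 0 < dI t0) by apply Hd.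
  destruct Hv0 as [M0 HM0].
  destruct Hv as [[Hvj _] [Hv01 Hvm]].
  assert (Hv0c : forall x, continuous v0 x).
  { intros x. apply cpt'. apply continuity_pt_locally. intros eps.
    destruct (Hvj 0 x ltac:(lra) eps (cond_pos eps)) as [d [Hd0 Hd1]].
    exists (mkposreal d Hd0). intros y Hy. rewrite <- !Hv01. apply Hd1; try lra.
    rewrite Rminus_eq_0, Rabs_R0; auto. exact Hy. }
  assert (Hwu : wok u).
  { destruct Hu as [[Hj _] [Hn _]]. split; auto. }
  assert (Hwub : wok (Ub ubar)).
  { destruct Hubar as [[Hj _] [Hn _]]. split; auto. }
  assert (Hcs : 0 < cstar / T) by (apply Rdiv_lt_0_compat; auto).
  assert (Hunif := h_unif h Hhc Hhinf).
  assert (Hpp : forall t, 0 <= p t <= Pm) by (intros; split; auto).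
  split.
  - intros c Hc eps Heps.
    eapply (outer_final DI dI tau p h HDIc HdIc Htauc Hdtc Hpc Hhc HDI0 HdI0 Htau Hpz Pm Hb Ct
              Hpp HHb HCt u (cstar / T) Dm tm Hwu HDm Htm Hh0 Hcs Hunif Hu_out v0 v M0 (dI t0)
              Hv0c HM0 Hdl Hdl2 Hvm c Hc eps Heps).
  - intros c Hc eps Heps.
    eapply (inner_final DI dI tau p h HDIc HdIc Htauc Hdtc Hpc Hhc HDI0 HdI0 Htau Hpz Pm Hb Ct
              Hpp HHb HCt u ubar (cstar / T) Dm tm Hwu Hwub HDm Htm Hcs Hunif Hu_in v0 v M0 (dI t0)
              Hv0c HM0 Hdl Hdl2 Hvm c Hc eps Heps).
Qed.
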